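(* If $w\in\{[4123],[2341]\}\subseteq S_4$, then there is no $x\in\mathfrak{sl}_4(\mathbb C)$ and Hessenberg space $H\subseteq\mathfrak{sl}_4(\mathbb C)$ such that $\mathcal B(x,H)=X_{w^{-1}}$ in $SL_4(\mathbb C)/B$.
   Context: $B$ is the Borel subgroup of upper triangular matrices in $SL_4(\mathbb C)$, with Lie algebra $\mathfrak b$. Permutations are in one-line notation; $\dot w$ is a scalar multiple in $SL_4(\mathbb C)$ of the permutation matrix with $e_i\mapsto e_{w(i)}$; $X_w$ is the closure of $B\dot wB/B$. A Hessenberg space is a subspace $H\subseteq\mathfrak{sl}_4(\mathbb C)$ with $[\mathfrak b,H]\subseteq H$; $\mathcal B(x,H)=\{gB: g^{-1}xg\in H\}$. *)

(* Defs.v *)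
From HB Require Import structures.
From mathcomp Require Import all_boot all_order all_algebra all_fingroup.
From mathcomp Require Import Rstruct.
From mathcomp Require Import complex.
From Stdlib Require Rdefinitions.

Set Implicit Arguments.
Unset Strict Implicit.
Unset Printing Implicit Defensive.

Import GRing.Theory.
Local Open Scope ring_scope.

Definition CC : fieldType := (Rdefinitions.R)[i].

Notation "''M4'" := ('M[CC]_4) (at level 0).

Definition inSL (g : 'M4) : Prop := \det g = 1.

Definition in_sl (x : 'M4) : Prop := \tr x = 0.

Definition upper (A : 'M4) : Prop := forall i j : 'I_4, (nat_of_ord j < nat_of_ord i)%N -> A i j = 0.

Definition inB (b : 'M4) : Prop := upper b /\ inSL b.

Definition in_borel_alg (y : 'M4) : Prop := upper y /\ in_sl y.

(* permutation matrix of w : e_i |-> e_{w(i)}, i.e. entry (w j, j) is 1 *)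
Definition perm_matrix (w : 'S_4) : 'M4 := \matrix_(i, j) ((i == w j)%:R).

Definition is_dot (w : 'S_4) (wd : 'M4) : Prop :=
  inSL wd /\ exists c : CC, wd = c *: perm_matrix w.

Definition bruhat_cell (w : 'S_4) (g : 'M4) : Prop :=
  exists b1 b2 wd, inB b1 /\ inB b2 /\ is_dot w wd /\ g = b1 *m wd *m b2.

Inductive polyfun : ('M4 -> CC) -> Prop :=
| polyfun_const (c : CC) : polyfun (fun _ => c)
| polyfun_coord (i j : 'I_4) : polyfun (fun A => A i j)
| polyfun_add f g : polyfun f -> polyfun g -> polyfun (fun A => f A + g A)
| polyfun_mul f g : polyfun f -> polyfun g -> polyfun (fun A => f A * g A).

Definition zclosure (S : 'M4 -> Prop) (g : 'M4) : Prop :=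
  forall f, polyfun f -> (forall h, S h -> f h = 0) -> f g = 0.

(* X_w, described by its preimage in SL_4(C): g B lies in X_w iff
   g lies in the closure of B dot(w) B (SL_4 is Zariski closed in M_4 and
   SL_4 -> SL_4/B is open, so this is the preimage of the closure). *)
Definition in_schubert (w : 'S_4) (g : 'M4) : Prop :=
  inSL g /\ zclosure (bruhat_cell w) g.

Definition hessenberg_space (H : {vspace 'M4}) : Prop :=
  (forall h, h \in H -> in_sl h) /\
  (forall y h, in_borel_alg y -> h \in H -> y *m h - h *m y \in H).

(* preimage in SL_4 of the Hessenberg variety B(x,H) *)
Definition in_hess (x : 'M4) (H : {vspace 'M4}) (g : 'M4) : Prop :=
  inSL g /\ invmx g *m x *m g \in H.

Definition oneline (w : 'S_4) : seq nat := [seq (val (w i)).+1 | i <- enum 'I_4].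

(* Main.v *)
Require Import Defs.
From HB Require Import structures.
From mathcomp Require Import all_boot all_order all_algebra all_fingroup.
From mathcomp Require Import Rstruct complex ring.
From Stdlib Require Import FunctionalExtensionality.
Set Implicit Arguments.
Unset Strict Implicit.
Unset Printing Implicit Defensive.
Import GRing.Theory Num.Theory.
Local Open Scope ring_scope.

Definition o0 : 'I_4 := @Ordinal 4 0 isT.
Definition o1 : 'I_4 := @Ordinal 4 1 isT.
Definition o2 : 'I_4 := @Ordinal 4 2 isT.
Definition o3 : 'I_4 := @Ordinal 4 3 isT.

Lemma sum4 (F : 'I_4 -> CC) : \sum_(k < 4) F k = F o0 + F o1 + F o2 + F o3.
Proof.
rewrite !big_ord_recr big_ord0 /= add0r.
by congr (F _ + F _ + F _ + F _); apply: val_inj.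
Qed.

Lemma prod4 (F : 'I_4 -> CC) : \prod_(k < 4) F k = F o0 * F o1 * F o2 * F o3.
Proof.
rewrite !big_ord_recr big_ord0 /= mul1r.
by congr (F _ * F _ * F _ * F _); apply: val_inj.
Qed.

Definition M4 (a b c d e f g h i j k l m n o p : CC) : 'M4 :=
  \matrix_(r, s) nth 0 (nth [::] [:: [:: a;b;c;d]; [:: e;f;g;h]; [:: i;j;k;l]; [:: m;n;o;p]] r) s.

Ltac ord4 r := case: r => [[|[|[|[|//]]]] ?].

Lemma M4_eta (A : 'M4) : A = M4 (A o0 o0) (A o0 o1) (A o0 o2) (A o0 o3)
  (A o1 o0) (A o1 o1) (A o1 o2) (A o1 o3) (A o2 o0) (A o2 o1) (A o2 o2) (A o2 o3)
  (A o3 o0) (A o3 o1) (A o3 o2) (A o3 o3).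
Proof.
apply/matrixP => r s; rewrite mxE; ord4 r; ord4 s; congr (A _ _); apply: val_inj => //.
Qed.

Lemma M4_mul a11 a12 a13 a14 a21 a22 a23 a24 a31 a32 a33 a34 a41 a42 a43 a44 b11 b12 b13 b14 b21 b22 b23 b24 b31 b32 b33 b34 b41 b42 b43 b44 :
  M4 a11 a12 a13 a14 a21 a22 a23 a24 a31 a32 a33 a34 a41 a42 a43 a44 *m M4 b11 b12 b13 b14 b21 b22 b23 b24 b31 b32 b33 b34 b41 b42 b43 b44 =
  M4 (a11*b11 + a12*b21 + a13*b31 + a14*b41) (a11*b12 + a12*b22 + a13*b32 + a14*b42) (a11*b13 + a12*b23 + a13*b33 + a14*b43) (a11*b14 + a12*b24 + a13*b34 + a14*b44) (a21*b11 + a22*b21 + a23*b31 + a24*b41) (a21*b12 + a22*b22 + a23*b32 + a24*b42) (a21*b13 + a22*b23 + a23*b33 + a24*b43) (a21*b14 + a22*b24 + a23*b34 + a24*b44) (a31*b11 + a32*b21 + a33*b31 + a34*b41) (a31*b12 + a32*b22 + a33*b32 + a34*b42) (a31*b13 + a32*b23 + a33*b33 + a34*b43) (a31*b14 + a32*b24 + a33*b34 + a34*b44) (a41*b11 + a42*b21 + a43*b31 + a44*b41) (a41*b12 + a42*b22 + a43*b32 + a44*b42) (a41*b13 + a42*b23 + a43*b33 + a44*b43) (a41*b14 + a42*b24 + a43*b34 + a44*b44).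
Proof.
apply/matrixP => r s; rewrite !mxE sum4 !mxE; ord4 r; ord4 s => //=.
Qed.

Lemma M4_add a11 a12 a13 a14 a21 a22 a23 a24 a31 a32 a33 a34 a41 a42 a43 a44 b11 b12 b13 b14 b21 b22 b23 b24 b31 b32 b33 b34 b41 b42 b43 b44 :
  M4 a11 a12 a13 a14 a21 a22 a23 a24 a31 a32 a33 a34 a41 a42 a43 a44 + M4 b11 b12 b13 b14 b21 b22 b23 b24 b31 b32 b33 b34 b41 b42 b43 b44 = M4 (a11+b11) (a12+b12) (a13+b13) (a14+b14) (a21+b21) (a22+b22) (a23+b23) (a24+b24) (a31+b31) (a32+b32) (a33+b33) (a34+b34) (a41+b41) (a42+b42) (a43+b43) (a44+b44).
Proof. apply/matrixP => r s; rewrite !mxE; ord4 r; ord4 s => //=. Qed.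

Lemma M4_scale (z : CC) a11 a12 a13 a14 a21 a22 a23 a24 a31 a32 a33 a34 a41 a42 a43 a44 :
  z *: M4 a11 a12 a13 a14 a21 a22 a23 a24 a31 a32 a33 a34 a41 a42 a43 a44 = M4 (z*a11) (z*a12) (z*a13) (z*a14) (z*a21) (z*a22) (z*a23) (z*a24) (z*a31) (z*a32) (z*a33) (z*a34) (z*a41) (z*a42) (z*a43) (z*a44).
Proof. apply/matrixP => r s; rewrite !mxE; ord4 r; ord4 s => //=. Qed.

Lemma M4_opp a11 a12 a13 a14 a21 a22 a23 a24 a31 a32 a33 a34 a41 a42 a43 a44 :
  - M4 a11 a12 a13 a14 a21 a22 a23 a24 a31 a32 a33 a34 a41 a42 a43 a44 = M4 (-a11) (-a12) (-a13) (-a14) (-a21) (-a22) (-a23) (-a24) (-a31) (-a32) (-a33) (-a34) (-a41) (-a42) (-a43) (-a44).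
Proof. apply/matrixP => r s; rewrite !mxE; ord4 r; ord4 s => //=. Qed.

Lemma M4_one : (1%:M : 'M4) = M4 1 0 0 0 0 1 0 0 0 0 1 0 0 0 0 1.
Proof. apply/matrixP => r s; rewrite !mxE; ord4 r; ord4 s => //=. Qed.

Lemma M4_E (A : 'M4) r s : (r < 4)%N -> (s < 4)%N -> True. Proof. by []. Qed.

Lemma polyfun_ext f g : (forall A, f A = g A) -> polyfun f -> polyfun g.
Proof. by move=> e; have -> : g = f by apply: functional_extensionality => A; rewrite e. Qed.

Lemma polyfun_sum (I : Type) (r : seq I) (F : I -> 'M4 -> CC) :
  (forall i, polyfun (F i)) -> polyfun (fun A => \sum_(i <- r) F i A).
Proof.
move=> hF; elim: r => [|i r IH].
  by apply: (polyfun_ext (f := fun _ => 0)) => [A|]; [rewrite big_nil|constructor].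
apply: (polyfun_ext (f := fun A => F i A + \sum_(j <- r) F j A)) => [A|]; first by rewrite big_cons.
by constructor.
Qed.

Lemma polyfun_prod (I : Type) (r : seq I) (F : I -> 'M4 -> CC) :
  (forall i, polyfun (F i)) -> polyfun (fun A => \prod_(i <- r) F i A).
Proof.
move=> hF; elim: r => [|i r IH].
  by apply: (polyfun_ext (f := fun _ => 1)) => [A|]; [rewrite big_nil|constructor].
apply: (polyfun_ext (f := fun A => F i A * \prod_(j <- r) F j A)) => [A|]; first by rewrite big_cons.
by constructor.
Qed.

Lemma polyfun_det : polyfun (fun A : 'M4 => \det A).
Proof.
apply: (polyfun_ext (f := fun A : 'M4 => \sum_(s <- index_enum {perm 'I_4}) ((-1) ^+ s * \prod_(i <- index_enum 'I_4) A i (s i)))).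
  by move=> A; rewrite /determinant.
apply: polyfun_sum => s; constructor; first by constructor.
by apply: polyfun_prod => i; constructor.
Qed.

Definition pexpr (f : CC -> CC) := exists p : {poly CC}, forall t, f t = p.[t].

Lemma pexpr_ext f g : (forall t, f t = g t) -> pexpr g -> pexpr f.
Proof. by move=> e [p hp]; exists p => t; rewrite e. Qed.
Lemma pexpr_const c : pexpr (fun _ => c).
Proof. by exists c%:P => t; rewrite hornerC. Qed.
Lemma pexpr_id : pexpr (fun t => t).
Proof. by exists 'X => t; rewrite hornerX. Qed.
Lemma pexpr_add f g : pexpr f -> pexpr g -> pexpr (fun t => f t + g t).
Proof. by move=> [p hp] [q hq]; exists (p + q) => t; rewrite hornerD hp hq. Qed.
Lemma pexpr_mul f g : pexpr f -> pexpr g -> pexpr (fun t => f t * g t).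
Proof. by move=> [p hp] [q hq]; exists (p * q) => t; rewrite hornerM hp hq. Qed.
Lemma pexpr_opp f : pexpr f -> pexpr (fun t => - f t).
Proof. by move=> [p hp]; exists (- p) => t; rewrite hornerN hp. Qed.

Lemma polyfun_curve (f : 'M4 -> CC) (gam : CC -> 'M4) :
  polyfun f -> (forall i j, pexpr (fun t => gam t i j)) -> pexpr (fun t => f (gam t)).
Proof.
move=> pf hg; elim: pf => [c|i j|f1 f2 _ h1 _ h2|f1 f2 _ h1 _ h2].
- exact: pexpr_const.
- exact: hg.
- exact: pexpr_add.
- exact: pexpr_mul.
Qed.

Lemma pexpr_zero (q : CC -> CC) : pexpr q -> (forall t, t != 0 -> q t = 0) -> q 0 = 0.
Proof.
move=> [p hp] hz; rewrite hp.
have -> : p = 0; last by rewrite horner0.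
apply/eqP; apply: contraT => pn0.
pose rs := [seq (i.+1)%:R : CC | i <- iota 0 (size p)].
have := max_poly_roots pn0 (rs := rs).
rewrite size_map size_iota ltnn; apply => //.
  apply/allP => t /mapP [i _ ->]; rewrite /root -hp hz //.
  by rewrite pnatr_eq0.
rewrite map_inj_uniq ?iota_uniq // => i j /eqP; rewrite eqr_nat eqSS => /eqP.
by [].
Qed.

Lemma curve_zclosure (S : 'M4 -> Prop) (gam : CC -> 'M4) :
  (forall i j, pexpr (fun t => gam t i j)) -> (forall t, t != 0 -> S (gam t)) ->
  zclosure S (gam 0).
Proof.
move=> hg hS f pf hf.
apply: (pexpr_zero (q := fun t => f (gam t))); first exact: polyfun_curve.
by move=> t tn0; apply: hf; apply: hS.
Qed.

Lemma det_upper (A : 'M4) : upper A -> \det A = A o0 o0 * A o1 o1 * A o2 o2 * A o3 o3.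
Proof.
move=> hA; rewrite -det_tr det_trig.
  by rewrite prod4 !mxE.
by apply/forallP => i; apply/forallP => j; apply/implyP => lij; rewrite mxE hA.
Qed.

Lemma det_lower (A : 'M4) : (forall i j : 'I_4, (i < j)%N -> A i j = 0) ->
  \det A = A o0 o0 * A o1 o1 * A o2 o2 * A o3 o3.
Proof.
move=> hA; rewrite det_trig.
  by rewrite prod4.
by apply/forallP => i; apply/forallP => j; apply/implyP => lij; rewrite hA.
Qed.

Lemma invmx_eq (A B : 'M4) : A *m B = 1%:M -> invmx A = B.
Proof.
move=> AB; have [uA _] := mulmx1_unit AB.
by rewrite -[invmx A]mulmx1 -AB mulmxA mulVmx // mul1mx.
Qed.

Lemma c4_ex : exists c : CC, c ^+ 4 = -1.
Proof.
exists (sqrtC 'i); rewrite (_ : 4 = 2 * 2)%N // exprM sqrtCK.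
exact: sqrCi.
Qed.

Lemma scale_cancel (H : {vspace 'M4}) (c : CC) (M : 'M4) :
  c != 0 -> c *: M \in H -> M \in H.
Proof.
by move=> cn0 hM; rewrite -[M]scale1r -(mulVf cn0) -scalerA rpredZ.
Qed.

Lemma brk (H : {vspace 'M4}) y h : hessenberg_space H -> in_borel_alg y -> h \in H ->
  y *m h - h *m y \in H.
Proof. by move=> [_ hb] hy hh; apply: hb. Qed.

Lemma ring_test (a b : CC) : (a + b) ^+ 2 = a^+2 + 2 * a * b + b ^+ 2.
Proof. ring. Qed.

Definition kz (i : 'I_4) : int := nth 0 [:: (-5)%Z; (-4)%Z; 1%Z; 8%Z] i.
Definition lz (i j : 'I_4) : int := kz i - kz j.
Definition Lam : seq int := [:: (-13)%Z; (-12)%Z; (-7)%Z; (-6)%Z; (-5)%Z; (-1)%Z; 0%Z; 1%Z; 5%Z; 6%Z; 7%Z; 12%Z; 13%Z].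
Definition h0 : 'M4 := diag_mx (\row_i (kz i)%:~R).

Lemma h0_borel : in_borel_alg h0.
Proof.
split.
  by move=> i j lji; rewrite mxE; case: eqP => // e; rewrite e ltnn in lji.
rewrite /in_sl mxtrace_diag sum4 !mxE /kz /=.
by rewrite -!rmorphD.
Qed.

Definition opg (mu : int) (A : 'M4) : 'M4 := h0 *m A - A *m h0 - (mu%:~R) *: A.

Lemma opgE mu A i j : opg mu A i j = (lz i j - mu)%:~R * A i j.
Proof.
rewrite /opg /h0 mul_diag_mx mul_mx_diag !mxE /lz !rmorphB /=; ring.
Qed.

Lemma opgH (H : {vspace 'M4}) mu A : hessenberg_space H -> A \in H -> opg mu A \in H.
Proof.
move=> hH hA; rewrite /opg rpredB ?rpredZ //; exact: brk hH h0_borel hA.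
Qed.

Definition opseq (ms : seq int) A := foldr opg A ms.

Lemma opseqE ms A i j : opseq ms A i j = (\prod_(mu <- ms) (lz i j - mu))%:~R * A i j.
Proof.
elim: ms => [|mu ms IH] /=; first by rewrite big_nil mul1r.
by rewrite opgE IH big_cons rmorphM mulrA.
Qed.

Lemma opseqH (H : {vspace 'M4}) ms A : hessenberg_space H -> A \in H -> opseq ms A \in H.
Proof. by move=> hH hA; elim: ms => //= mu ms IH; exact: opgH. Qed.

Lemma lz_Lam i j : lz i j \in Lam.
Proof. by ord4 i; ord4 j. Qed.

Lemma lz_inj i j a b : a != b -> lz i j == lz a b -> (i == a) && (j == b).
Proof. by ord4 i; ord4 j; ord4 a; ord4 b. Qed.

Lemma lz0 i j : (lz i j == 0) = (i == j).
Proof. by ord4 i; ord4 j. Qed.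

Lemma prod_zero (ms : seq int) (l : int) : l \in ms -> \prod_(mu <- ms) (l - mu) = 0.
Proof.
move=> lin; apply/eqP; rewrite prodf_seq_eq0; apply/hasP; exists l => //.
by rewrite subrr eqxx.
Qed.

Lemma prod_nz (ms : seq int) (l : int) : l \notin ms -> \prod_(mu <- ms) (l - mu) != 0.
Proof.
move=> lnin; rewrite prodf_seq_neq0; apply/allP => mu mun /=.
rewrite subr_eq0; apply: contraNneq lnin => ->; exact: mun.
Qed.

Lemma grad_off (H : {vspace 'M4}) (A : 'M4) (a b : 'I_4) :
  hessenberg_space H -> A \in H -> a != b -> A a b *: delta_mx a b \in H.
Proof.
move=> hH hA ab.
pose ms := [seq mu <- Lam | mu != lz a b].
have hn : lz a b \notin ms by rewrite mem_filter eqxx.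
apply: (scale_cancel (c := (\prod_(mu <- ms) (lz a b - mu))%:~R)).
  by rewrite intr_eq0 prod_nz.
have -> : (\prod_(mu <- ms) (lz a b - mu))%:~R *: (A a b *: delta_mx a b) = opseq ms A.
  apply/matrixP => i j; rewrite opseqE !mxE.
  case: (boolP ((i == a) && (j == b))) => [/andP [/eqP -> /eqP ->]|nij].
    by rewrite ?eqxx /= ?mulr1.
  rewrite mulr0 mulr0 prod_zero ?mul0r //.
  rewrite mem_filter lz_Lam andbT; apply: contra nij; exact: lz_inj.
exact: opseqH.
Qed.

Lemma grad_diag (H : {vspace 'M4}) (A : 'M4) :
  hessenberg_space H -> A \in H -> diag_mx (\row_i A i i) \in H.
Proof.
move=> hH hA.
pose ms := [seq mu <- Lam | mu != 0].
have hn : (0 : int) \notin ms by rewrite mem_filter eqxx.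
apply: (scale_cancel (c := (\prod_(mu <- ms) (0 - mu))%:~R)).
  by rewrite intr_eq0 prod_nz.
have -> : (\prod_(mu <- ms) (0 - mu))%:~R *: diag_mx (\row_i A i i) = opseq ms A.
  apply/matrixP => i j; rewrite opseqE !mxE.
  case: (boolP (i == j)) => [/eqP ->|nij].
    have /eqP -> : lz j j == 0 by rewrite lz0.
    by rewrite mulr1n mulrC.
  rewrite prod_zero ?mulr0 ?mul0r ?mulr0n //.
  by rewrite mem_filter lz_Lam andbT lz0.
exact: opseqH.
Qed.

Lemma upper_M4 a b c d f g h k l p : upper (M4 a b c d 0 f g h 0 0 k l 0 0 0 p).
Proof. by move=> i j; ord4 i; ord4 j; rewrite /M4 mxE. Qed.

Lemma det_M4_upper a b c d f g h k l p :
  \det (M4 a b c d 0 f g h 0 0 k l 0 0 0 p) = a * f * k * p.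
Proof. rewrite det_upper; last exact: upper_M4. by rewrite /M4 !mxE. Qed.

Lemma det_M4_lower a e f i j k m n o p :
  \det (M4 a 0 0 0 e f 0 0 i j k 0 m n o p) = a * f * k * p.
Proof. rewrite det_lower; first by rewrite /M4 !mxE. by move=> r s; ord4 r; ord4 s; rewrite /M4 mxE. Qed.

Lemma upper_mul (A B : 'M4) : upper A -> upper B -> upper (A *m B).
Proof.
move=> hA hB i j lji; rewrite mxE big1 // => k _.
case: (ltnP k i) => [lki|lik]; first by rewrite hA // mul0r.
by rewrite hB ?mulr0 // (leq_trans lji lik).
Qed.

Lemma cell_leftB (u : 'S_4) (b g : 'M4) : inB b -> bruhat_cell u g -> bruhat_cell u (b *m g).
Proof.
move=> [ub sb] [b1 [b2 [wd [[ub1 sb1] [hb2 [hwd ->]]]]]].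
exists (b *m b1), b2, wd; split; first split.
- exact: upper_mul.
- by rewrite /inSL det_mulmx sb sb1 mulr1.
by split => //; split => //; rewrite !mulmxA.
Qed.

Lemma cell_SL (u : 'S_4) (g : 'M4) : bruhat_cell u g -> inSL g.
Proof.
move=> [b1 [b2 [wd [[_ sb1] [[_ sb2] [[swd _] ->]]]]]].
by rewrite /inSL !det_mulmx sb1 sb2 swd !mulr1.
Qed.


Lemma zcl_SL (u : 'S_4) (g : 'M4) : zclosure (bruhat_cell u) g -> inSL g.
Proof.
move=> hz.
have h : (fun A : 'M4 => \det A + (-1)) g = 0.
  apply: (hz (fun A : 'M4 => \det A + (-1))).
    by constructor; [exact: polyfun_det|constructor].
  by move=> A /cell_SL ->; rewrite subrr.
by apply/eqP; rewrite -subr_eq0; apply/eqP.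
Qed.

Lemma schub_of (u : 'S_4) (g : 'M4) : zclosure (bruhat_cell u) g -> in_schubert u g.
Proof. by move=> h; split => //; exact: zcl_SL h. Qed.

Lemma hess_in (u : 'S_4) (x : 'M4) (H : {vspace 'M4}) (P Pi : 'M4) :
  (forall g, in_hess x H g <-> in_schubert u g) ->
  zclosure (bruhat_cell u) P -> P *m Pi = 1%:M -> Pi *m x *m P \in H.
Proof.
move=> hiff hz hP; have [_] := (proj2 (hiff P) (schub_of hz)).
by rewrite (invmx_eq hP).
Qed.

Lemma hess_out (u : 'S_4) (x : 'M4) (H : {vspace 'M4}) (P Pi : 'M4) (i j : 'I_4) :
  (forall g, in_hess x H g <-> in_schubert u g) ->
  (forall g, bruhat_cell u g -> g i j = 0) ->
  \det P = 1 -> P *m Pi = 1%:M -> P i j != 0 -> Pi *m x *m P \in H -> False.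
Proof.
move=> hiff hc dP hP nz hin.
have hh : in_hess x H P by split; [exact: dP | rewrite (invmx_eq hP)].
have [_ hz] := proj1 (hiff P) hh.
have := hz (fun A => A i j) (polyfun_coord i j) hc.
by move/eqP; rewrite (negPf nz).
Qed.

Lemma cell_gen (u : 'S_4) (PU : 'M4) : perm_matrix u = PU -> \det PU = -1 ->
  forall b1 b2 : 'M4, upper b1 -> upper b2 -> \det b1 = -1 -> \det b2 = 1 ->
  bruhat_cell u (b1 *m PU *m b2).
Proof.
move=> hPU dPU b1 b2 ub1 ub2 db1 db2.
have [c c4] := c4_ex.
have cn0 : c != 0.
  apply/eqP => c0; move: c4; rewrite c0 expr0n /= => /eqP; rewrite eq_sym oppr_eq0 oner_eq0 //.
exists (c^-1 *: b1), b2, (c *: PU); split; first split.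
- by move=> i j lji; rewrite mxE ub1 // mulr0.
- by rewrite /inSL detZ db1 exprVn c4 invrN invr1 mulrNN mul1r.
split; first by split.
split; first by split; [rewrite /inSL detZ dPU c4 mulrNN mul1r | exists c; rewrite hPU].
by rewrite -scalemxAl -scalemxAr scalerA mulVf // scale1r.
Qed.

Lemma inB1 : inB 1%:M.
Proof. split; [by move=> i j lji; rewrite mxE; case: eqP => // e; rewrite e ltnn in lji | by rewrite /inSL det1]. Qed.

Lemma pexpr_M4 (a11 a12 a13 a14 a21 a22 a23 a24 a31 a32 a33 a34 a41 a42 a43 a44 : CC -> CC) :
  pexpr a11 -> pexpr a12 -> pexpr a13 -> pexpr a14 -> pexpr a21 -> pexpr a22 -> pexpr a23 -> pexpr a24 ->
  pexpr a31 -> pexpr a32 -> pexpr a33 -> pexpr a34 -> pexpr a41 -> pexpr a42 -> pexpr a43 -> pexpr a44 ->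
  forall i j, pexpr (fun t => M4 (a11 t) (a12 t) (a13 t) (a14 t) (a21 t) (a22 t) (a23 t) (a24 t)
                               (a31 t) (a32 t) (a33 t) (a34 t) (a41 t) (a42 t) (a43 t) (a44 t) i j).
Proof.
move=> p11 p12 p13 p14 p21 p22 p23 p24 p31 p32 p33 p34 p41 p42 p43 p44 i j.
apply: (pexpr_ext (g := fun t => (nth (fun _ => 0) (nth [::] [:: [:: a11; a12; a13; a14]; [:: a21; a22; a23; a24];
   [:: a31; a32; a33; a34]; [:: a41; a42; a43; a44]] i) j) t)).
  by move=> t; rewrite /M4 mxE; ord4 i; ord4 j.
by ord4 i; ord4 j.
Qed.

Lemma pexpr_mulmx (b : 'M4) (gam : CC -> 'M4) :
  (forall i j, pexpr (fun t => gam t i j)) -> forall i j, pexpr (fun t => (b *m gam t) i j).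
Proof.
move=> hg i j; apply: (pexpr_ext (g := fun t => b i o0 * gam t o0 j + b i o1 * gam t o1 j + b i o2 * gam t o2 j + b i o3 * gam t o3 j)).
  by move=> t; rewrite mxE sum4.
by repeat apply: pexpr_add; apply: pexpr_mul; first [exact: pexpr_const | exact: hg].
Qed.

Lemma zcl_curve (u : 'S_4) (PU : 'M4) (hPU : perm_matrix u = PU) (dPU : \det PU = -1)
  (b : 'M4) (hb : inB b) (gam b1 b2 : CC -> 'M4) :
  (forall i j, pexpr (fun t => gam t i j)) ->
  (forall t, t != 0 -> gam t = b1 t *m PU *m b2 t) ->
  (forall t, t != 0 -> [/\ upper (b1 t), upper (b2 t), \det (b1 t) = -1 & \det (b2 t) = 1]) ->
  zclosure (bruhat_cell u) (b *m gam 0).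
Proof.
move=> hp he hb12.
apply: (curve_zclosure (gam := fun t => b *m gam t)); first exact: pexpr_mulmx.
move=> t tn0 /=; apply: cell_leftB => //; rewrite he //.
by have [? ? ? ?] := hb12 t tn0; apply: cell_gen.
Qed.

Ltac pex := repeat first [ apply: pexpr_id | apply: pexpr_const | apply: pexpr_add | apply: pexpr_mul | apply: pexpr_opp ].

Ltac m4 := rewrite ?(M4_mul, M4_opp, M4_scale, M4_add); f_equal; ring.
Ltac m4f := rewrite ?(M4_mul, M4_opp, M4_scale, M4_add); f_equal; field.

Lemma M4E a11 a12 a13 a14 a21 a22 a23 a24 a31 a32 a33 a34 a41 a42 a43 a44 i j :
  M4 a11 a12 a13 a14 a21 a22 a23 a24 a31 a32 a33 a34 a41 a42 a43 a44 i j =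
  nth 0 (nth [::] [:: [:: a11; a12; a13; a14]; [:: a21; a22; a23; a24]; [:: a31; a32; a33; a34]; [:: a41; a42; a43; a44]] i) j.
Proof. by rewrite /M4 mxE. Qed.

Lemma tr_M4 a11 a12 a13 a14 a21 a22 a23 a24 a31 a32 a33 a34 a41 a42 a43 a44 :
  \tr (M4 a11 a12 a13 a14 a21 a22 a23 a24 a31 a32 a33 a34 a41 a42 a43 a44) = a11 + a22 + a33 + a44.
Proof. by rewrite /mxtrace sum4 !M4E. Qed.

Lemma brkE (H : {vspace 'M4}) y h r : hessenberg_space H -> in_borel_alg y -> h \in H ->
  y *m h - h *m y = r -> r \in H.
Proof. by move=> hH hy hh <-; exact: brk. Qed.

Definition E11 : 'M4 := M4 1 0 0 0 0 0 0 0 0 0 0 0 0 0 0 0.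
Definition E12 : 'M4 := M4 0 1 0 0 0 0 0 0 0 0 0 0 0 0 0 0.
Definition E13 : 'M4 := M4 0 0 1 0 0 0 0 0 0 0 0 0 0 0 0 0.
Definition E14 : 'M4 := M4 0 0 0 1 0 0 0 0 0 0 0 0 0 0 0 0.
Definition E21 : 'M4 := M4 0 0 0 0 1 0 0 0 0 0 0 0 0 0 0 0.
Definition E22 : 'M4 := M4 0 0 0 0 0 1 0 0 0 0 0 0 0 0 0 0.
Definition E23 : 'M4 := M4 0 0 0 0 0 0 1 0 0 0 0 0 0 0 0 0.
Definition E24 : 'M4 := M4 0 0 0 0 0 0 0 1 0 0 0 0 0 0 0 0.
Definition E31 : 'M4 := M4 0 0 0 0 0 0 0 0 1 0 0 0 0 0 0 0.
Definition E32 : 'M4 := M4 0 0 0 0 0 0 0 0 0 1 0 0 0 0 0 0.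
Definition E33 : 'M4 := M4 0 0 0 0 0 0 0 0 0 0 1 0 0 0 0 0.
Definition E34 : 'M4 := M4 0 0 0 0 0 0 0 0 0 0 0 1 0 0 0 0.
Definition E41 : 'M4 := M4 0 0 0 0 0 0 0 0 0 0 0 0 1 0 0 0.
Definition E42 : 'M4 := M4 0 0 0 0 0 0 0 0 0 0 0 0 0 1 0 0.
Definition E43 : 'M4 := M4 0 0 0 0 0 0 0 0 0 0 0 0 0 0 1 0.
Definition E44 : 'M4 := M4 0 0 0 0 0 0 0 0 0 0 0 0 0 0 0 1.
Lemma dE11 : delta_mx o0 o0 = E11.
Proof. by apply/matrixP => r s; rewrite !mxE; ord4 r; ord4 s. Qed.
Lemma dE12 : delta_mx o0 o1 = E12.
Proof. by apply/matrixP => r s; rewrite !mxE; ord4 r; ord4 s. Qed.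
Lemma dE13 : delta_mx o0 o2 = E13.
Proof. by apply/matrixP => r s; rewrite !mxE; ord4 r; ord4 s. Qed.
Lemma dE14 : delta_mx o0 o3 = E14.
Proof. by apply/matrixP => r s; rewrite !mxE; ord4 r; ord4 s. Qed.
Lemma dE21 : delta_mx o1 o0 = E21.
Proof. by apply/matrixP => r s; rewrite !mxE; ord4 r; ord4 s. Qed.
Lemma dE22 : delta_mx o1 o1 = E22.
Proof. by apply/matrixP => r s; rewrite !mxE; ord4 r; ord4 s. Qed.
Lemma dE23 : delta_mx o1 o2 = E23.
Proof. by apply/matrixP => r s; rewrite !mxE; ord4 r; ord4 s. Qed.
Lemma dE24 : delta_mx o1 o3 = E24.
Proof. by apply/matrixP => r s; rewrite !mxE; ord4 r; ord4 s. Qed.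
Lemma dE31 : delta_mx o2 o0 = E31.
Proof. by apply/matrixP => r s; rewrite !mxE; ord4 r; ord4 s. Qed.
Lemma dE32 : delta_mx o2 o1 = E32.
Proof. by apply/matrixP => r s; rewrite !mxE; ord4 r; ord4 s. Qed.
Lemma dE33 : delta_mx o2 o2 = E33.
Proof. by apply/matrixP => r s; rewrite !mxE; ord4 r; ord4 s. Qed.
Lemma dE34 : delta_mx o2 o3 = E34.
Proof. by apply/matrixP => r s; rewrite !mxE; ord4 r; ord4 s. Qed.
Lemma dE41 : delta_mx o3 o0 = E41.
Proof. by apply/matrixP => r s; rewrite !mxE; ord4 r; ord4 s. Qed.
Lemma dE42 : delta_mx o3 o1 = E42.
Proof. by apply/matrixP => r s; rewrite !mxE; ord4 r; ord4 s. Qed.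
Lemma dE43 : delta_mx o3 o2 = E43.
Proof. by apply/matrixP => r s; rewrite !mxE; ord4 r; ord4 s. Qed.
Lemma dE44 : delta_mx o3 o3 = E44.
Proof. by apply/matrixP => r s; rewrite !mxE; ord4 r; ord4 s. Qed.
Lemma bE12 : in_borel_alg E12.
Proof. by split; [exact: upper_M4 | rewrite /in_sl tr_M4; ring]. Qed.
Lemma bE13 : in_borel_alg E13.
Proof. by split; [exact: upper_M4 | rewrite /in_sl tr_M4; ring]. Qed.
Lemma bE14 : in_borel_alg E14.
Proof. by split; [exact: upper_M4 | rewrite /in_sl tr_M4; ring]. Qed.
Lemma bE23 : in_borel_alg E23.
Proof. by split; [exact: upper_M4 | rewrite /in_sl tr_M4; ring]. Qed.
Lemma bE24 : in_borel_alg E24.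
Proof. by split; [exact: upper_M4 | rewrite /in_sl tr_M4; ring]. Qed.
Lemma bE34 : in_borel_alg E34.
Proof. by split; [exact: upper_M4 | rewrite /in_sl tr_M4; ring]. Qed.

Lemma diag_M4 (A : 'M4) : diag_mx (\row_i A i i) = M4 (A o0 o0) 0 0 0 0 (A o1 o1) 0 0 0 0 (A o2 o2) 0 0 0 0 (A o3 o3).
Proof.
apply/matrixP => r s; rewrite M4E !mxE; ord4 r; ord4 s => //=; rewrite ?mulr1n ?mulr0n //;
  by congr (A _ _); apply: val_inj.
Qed.

Lemma full_H (H : {vspace 'M4}) :
  E12 \in H -> E13 \in H -> E14 \in H -> E21 \in H -> E23 \in H -> E24 \in H ->
  E31 \in H -> E32 \in H -> E34 \in H -> E41 \in H -> E42 \in H -> E43 \in H ->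
  E11 - E44 \in H -> E22 - E44 \in H -> E33 - E44 \in H ->
  forall A : 'M4, \tr A = 0 -> A \in H.
Proof.
move=> h12 h13 h14 h21 h23 h24 h31 h32 h34 h41 h42 h43 d1 d2 d3 A trA.
have -> : A = A o0 o1 *: E12 + A o0 o2 *: E13 + A o0 o3 *: E14 + A o1 o0 *: E21 + A o1 o2 *: E23
  + A o1 o3 *: E24 + A o2 o0 *: E31 + A o2 o1 *: E32 + A o2 o3 *: E34 + A o3 o0 *: E41
  + A o3 o1 *: E42 + A o3 o2 *: E43 + A o0 o0 *: (E11 - E44) + A o1 o1 *: (E22 - E44)
  + A o2 o2 *: (E33 - E44).
  have e : A o3 o3 = - (A o0 o0 + A o1 o1 + A o2 o2).
    by move: trA; rewrite {1}(M4_eta A) tr_M4 => trA; rewrite -[RHS]addr0 -trA; ring.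
  rewrite /E12 /E13 /E14 /E21 /E23 /E24 /E31 /E32 /E34 /E41 /E42 /E43 /E11 /E22 /E33 /E44.
  apply: (etrans (M4_eta A)); rewrite !M4_opp !M4_add !M4_scale !M4_add e; f_equal; ring.
by rewrite !rpredD ?rpredZ.
Qed.

Lemma M4_tr a11 a12 a13 a14 a21 a22 a23 a24 a31 a32 a33 a34 a41 a42 a43 a44 : (M4 a11 a12 a13 a14 a21 a22 a23 a24 a31 a32 a33 a34 a41 a42 a43 a44)^T = M4 a11 a21 a31 a41 a12 a22 a32 a42 a13 a23 a33 a43 a14 a24 a34 a44.
Proof. by apply/matrixP => r s; rewrite mxE !M4E; ord4 r; ord4 s. Qed.


Definition I4 : 'M4 := M4 1 0 0 0 0 1 0 0 0 0 1 0 0 0 0 1.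
Definition S1 : 'M4 := M4 0 (-1) 0 0 1 0 0 0 0 0 1 0 0 0 0 1.
Definition S2 : 'M4 := M4 1 0 0 0 0 0 (-1) 0 0 1 0 0 0 0 0 1.
Definition S3 : 'M4 := M4 1 0 0 0 0 1 0 0 0 0 0 (-1) 0 0 1 0.

Lemma det_S1 : \det S1 = 1.
Proof.
have -> : S1 = M4 1 0 0 0 1 1 0 0 0 0 1 0 0 0 0 1 *m M4 1 (-1) 0 0 0 1 0 0 0 0 1 0 0 0 0 1
               *m M4 1 0 0 0 1 1 0 0 0 0 1 0 0 0 0 1 by rewrite /S1; m4.
by rewrite !det_mulmx det_M4_lower det_M4_upper; ring.
Qed.
Lemma det_S2 : \det S2 = 1.
Proof.
have -> : S2 = M4 1 0 0 0 0 1 0 0 0 1 1 0 0 0 0 1 *m M4 1 0 0 0 0 1 (-1) 0 0 0 1 0 0 0 0 1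
               *m M4 1 0 0 0 0 1 0 0 0 1 1 0 0 0 0 1 by rewrite /S2; m4.
by rewrite !det_mulmx det_M4_lower det_M4_upper; ring.
Qed.
Lemma det_S3 : \det S3 = 1.
Proof.
have -> : S3 = M4 1 0 0 0 0 1 0 0 0 0 1 0 0 0 1 1 *m M4 1 0 0 0 0 1 0 0 0 0 1 (-1) 0 0 0 1
               *m M4 1 0 0 0 0 1 0 0 0 0 1 0 0 0 1 1 by rewrite /S3; m4.
by rewrite !det_mulmx det_M4_lower det_M4_upper; ring.
Qed.

Definition PV : 'M4 := M4 0 0 0 1 1 0 0 0 0 1 0 0 0 0 1 0.

Lemma det_PV : \det PV = -1.
Proof.
have -> : PV = M4 (-1) 0 0 0 0 1 0 0 0 0 1 0 0 0 0 1 *m S1 *m S2 *m S3 by rewrite /PV /S1 /S2 /S3; m4.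
by rewrite !det_mulmx det_S1 det_S2 det_S3 det_M4_upper; ring.
Qed.

Lemma cellV_entry (u : 'S_4) (hu : perm_matrix u = PV) (g : 'M4) :
  bruhat_cell u g -> g o3 o1 = 0 /\ g o2 o0 = 0.
Proof.
move=> [b1 [b2 [wd [[ub1 _] [[ub2 _] [[_ [c ->]] ->]]]]]].
rewrite hu (M4_eta b1) (M4_eta b2) /PV.
rewrite [b1 o1 o0]ub1 // [b1 o2 o0]ub1 // [b1 o3 o0]ub1 // [b1 o2 o1]ub1 // [b1 o3 o1]ub1 // [b1 o3 o2]ub1 //.
rewrite [b2 o1 o0]ub2 // [b2 o2 o0]ub2 // [b2 o3 o0]ub2 // [b2 o2 o1]ub2 // [b2 o3 o1]ub2 // [b2 o3 o2]ub2 //.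
rewrite M4_scale !M4_mul /M4 !mxE /=; split; ring.
Qed.

Definition gamV_e (t : CC) : 'M4 := M4 1 0 0 0 (t) 1 0 0 0 (t) 1 0 0 0 (t) 1.
Definition b1V_e (t : CC) : 'M4 := M4 (-1) (t^-1) (- (t ^+ 2)^-1) ((t ^+ 3)^-1) 0 1 0 0 0 0 1 0 0 0 0 1.
Definition b2V_e (t : CC) : 'M4 := M4 (t) 1 0 0 0 (t) 1 0 0 0 (t) 1 0 0 0 ((t ^+ 3)^-1).
Definition gamV_a (t : CC) : 'M4 := M4 0 (-1) 0 0 1 0 0 0 0 (t) 1 0 0 0 (t) 1.
Definition b1V_a (t : CC) : 'M4 := M4 (-1) 0 (- t^-1) ((t ^+ 2)^-1) 0 1 0 0 0 0 1 0 0 0 0 1.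
Definition b2V_a (t : CC) : 'M4 := M4 1 0 0 0 0 (t) 1 0 0 0 (t) 1 0 0 0 ((t ^+ 2)^-1).
Definition gamV_b (t : CC) : 'M4 := M4 1 0 0 0 (t) 0 (-1) 0 0 1 0 0 0 0 (t) 1.
Definition b1V_b (t : CC) : 'M4 := M4 (-1) (t^-1) 0 ((t ^+ 2)^-1) 0 1 0 0 0 0 1 0 0 0 0 1.
Definition b2V_b (t : CC) : 'M4 := M4 (t) 0 (-1) 0 0 1 0 0 0 0 (t) 1 0 0 0 ((t ^+ 2)^-1).
Definition gamV_c (t : CC) : 'M4 := M4 1 0 0 0 (t) 1 0 0 0 (t) 0 (-1) 0 0 1 0.
Definition b1V_c (t : CC) : 'M4 := M4 (-1) (t^-1) (- (t ^+ 2)^-1) 0 0 1 0 0 0 0 1 0 0 0 0 1.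
Definition b2V_c (t : CC) : 'M4 := M4 (t) 1 0 0 0 (t) 0 (-1) 0 0 1 0 0 0 0 ((t ^+ 2)^-1).
Definition gamV_ac (t : CC) : 'M4 := M4 0 (-1) 0 0 1 0 0 0 0 (t) 0 (-1) 0 0 1 0.
Definition b1V_ac (t : CC) : 'M4 := M4 (-1) 0 (- t^-1) 0 0 1 0 0 0 0 1 0 0 0 0 1.
Definition b2V_ac (t : CC) : 'M4 := M4 1 0 0 0 0 (t) 0 (-1) 0 0 1 0 0 0 0 (t^-1).
Definition gamV_bc (t : CC) : 'M4 := M4 1 0 0 0 (t) 0 0 1 0 1 0 0 0 0 1 0.
Definition b1V_bc (t : CC) : 'M4 := M4 (-1) (t^-1) 0 0 0 1 0 0 0 0 1 0 0 0 0 1.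
Definition b2V_bc (t : CC) : 'M4 := M4 (t) 0 0 1 0 1 0 0 0 0 1 0 0 0 0 (t^-1).

Definition S13 : 'M4 := M4 0 (-1) 0 0 1 0 0 0 0 0 0 (-1) 0 0 1 0.
Definition S23 : 'M4 := M4 1 0 0 0 0 0 0 1 0 1 0 0 0 0 1 0.

Section ZV.
Variable (u : 'S_4).
Hypothesis hu : perm_matrix u = PV.

Lemma zclV_e b : inB b -> zclosure (bruhat_cell u) (b *m I4).
Proof.
move=> hb; have -> : I4 = gamV_e 0 by [].
apply: (zcl_curve hu det_PV hb (b1 := b1V_e) (b2 := b2V_e)).
- by rewrite /gamV_e; apply: pexpr_M4; pex.
- by move=> t tn0; rewrite /gamV_e /b1V_e /b2V_e /PV !M4_mul; f_equal; field.
- by move=> t tn0; split; rewrite /b1V_e /b2V_e ?det_M4_upper; try exact: upper_M4; field.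
Qed.

Lemma zclV_a b : inB b -> zclosure (bruhat_cell u) (b *m S1).
Proof.
move=> hb; have -> : S1 = gamV_a 0 by [].
apply: (zcl_curve hu det_PV hb (b1 := b1V_a) (b2 := b2V_a)).
- by rewrite /gamV_a; apply: pexpr_M4; pex.
- by move=> t tn0; rewrite /gamV_a /b1V_a /b2V_a /PV !M4_mul; f_equal; field.
- by move=> t tn0; split; rewrite /b1V_a /b2V_a ?det_M4_upper; try exact: upper_M4; field.
Qed.

Lemma zclV_b b : inB b -> zclosure (bruhat_cell u) (b *m S2).
Proof.
move=> hb; have -> : S2 = gamV_b 0 by [].
apply: (zcl_curve hu det_PV hb (b1 := b1V_b) (b2 := b2V_b)).
- by rewrite /gamV_b; apply: pexpr_M4; pex.
- by move=> t tn0; rewrite /gamV_b /b1V_b /b2V_b /PV !M4_mul; f_equal; field.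
- by move=> t tn0; split; rewrite /b1V_b /b2V_b ?det_M4_upper; try exact: upper_M4; field.
Qed.

Lemma zclV_c b : inB b -> zclosure (bruhat_cell u) (b *m S3).
Proof.
move=> hb; have -> : S3 = gamV_c 0 by [].
apply: (zcl_curve hu det_PV hb (b1 := b1V_c) (b2 := b2V_c)).
- by rewrite /gamV_c; apply: pexpr_M4; pex.
- by move=> t tn0; rewrite /gamV_c /b1V_c /b2V_c /PV !M4_mul; f_equal; field.
- by move=> t tn0; split; rewrite /b1V_c /b2V_c ?det_M4_upper; try exact: upper_M4; field.
Qed.

Lemma zclV_ac b : inB b -> zclosure (bruhat_cell u) (b *m S13).
Proof.
move=> hb; have -> : S13 = gamV_ac 0 by [].
apply: (zcl_curve hu det_PV hb (b1 := b1V_ac) (b2 := b2V_ac)).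
- by rewrite /gamV_ac; apply: pexpr_M4; pex.
- by move=> t tn0; rewrite /gamV_ac /b1V_ac /b2V_ac /PV !M4_mul; f_equal; field.
- by move=> t tn0; split; rewrite /b1V_ac /b2V_ac ?det_M4_upper; try exact: upper_M4; field.
Qed.

Lemma zclV_bc b : inB b -> zclosure (bruhat_cell u) (b *m S23).
Proof.
move=> hb; have -> : S23 = gamV_bc 0 by [].
apply: (zcl_curve hu det_PV hb (b1 := b1V_bc) (b2 := b2V_bc)).
- by rewrite /gamV_bc; apply: pexpr_M4; pex.
- by move=> t tn0; rewrite /gamV_bc /b1V_bc /b2V_bc /PV !M4_mul; f_equal; field.
- by move=> t tn0; split; rewrite /b1V_bc /b2V_bc ?det_M4_upper; try exact: upper_M4; field.
Qed.
End ZV.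

Module MV.

Definition S123 : 'M4 := M4 0 0 0 (-1) 1 0 0 0 0 1 0 0 0 0 1 0.
Definition G32 : 'M4 := M4 1 0 0 0 0 0 (-1) 0 0 0 0 (-1) 0 1 0 0.
Definition G21 : 'M4 := M4 0 (-1) 0 0 0 0 (-1) 0 1 0 0 0 0 0 0 1.

Lemma det_G32 : \det G32 = 1.
Proof. have -> : G32 = S3 *m S2 by rewrite /G32 /S3 /S2; m4. by rewrite det_mulmx det_S3 det_S2 mulr1. Qed.
Lemma det_G21 : \det G21 = 1.
Proof. have -> : G21 = S2 *m S1 by rewrite /G21 /S2 /S1; m4. by rewrite det_mulmx det_S2 det_S1 mulr1. Qed.

Lemma nz2 : (-2 : CC) != 0. Proof. by rewrite oppr_eq0 pnatr_eq0. Qed.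
Lemma nzN1 : (-1 : CC) != 0. Proof. by rewrite oppr_eq0 oner_eq0. Qed.

Section MainV.
Variable (u : 'S_4).
Hypothesis hu : perm_matrix u = PV.
Variables (a11 a12 a13 a14 a21 a22 a23 a24 a31 a32 a33 a34 a41 a42 a43 a44 : CC).
Local Notation X := (M4 a11 a12 a13 a14 a21 a22 a23 a24 a31 a32 a33 a34 a41 a42 a43 a44).
Variable H : {vspace 'M4}.
Hypothesis hH : hessenberg_space H.
Hypothesis htr : a11 + a22 + a33 + a44 = 0.
Hypothesis hiff : forall g, in_hess X H g <-> in_schubert u g.

Lemma zclV_v b : inB b -> zclosure (bruhat_cell u) (b *m S123).
Proof.
move=> hb f _ hf; apply: hf; apply: cell_leftB => //.
have -> : S123 = M4 (-1) 0 0 0 0 1 0 0 0 0 1 0 0 0 0 1 *m PV *m I4 by rewrite /S123 /PV /I4; m4.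
apply: (cell_gen hu det_PV); try exact: upper_M4; by rewrite det_M4_upper; ring.
Qed.

Lemma hinV P : (forall b, inB b -> zclosure (bruhat_cell u) (b *m P)) -> P *m P^T = 1%:M ->
  P^T *m X *m P \in H.
Proof.
by move=> hz hP; apply: (hess_in hiff) => //; have := hz _ inB1; rewrite mul1mx.
Qed.

Lemma from_grad (A : 'M4) (i j : 'I_4) (c : CC) (M : 'M4) : A \in H -> i != j ->
  A i j = c -> c != 0 -> delta_mx i j = M -> M \in H.
Proof.
move=> hA ij hc cn0 hM; have := grad_off hH hA ij.
by rewrite hc hM; apply: scale_cancel.
Qed.

Lemma fe : I4^T *m X *m I4 \in H.
Proof. by apply: hinV; [exact: zclV_e | rewrite /I4 M4_tr M4_one; m4]. Qed.
Lemma fa : S1^T *m X *m S1 \in H.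
Proof. by apply: hinV; [exact: zclV_a | rewrite /S1 M4_tr M4_one; m4]. Qed.
Lemma fb : S2^T *m X *m S2 \in H.
Proof. by apply: hinV; [exact: zclV_b | rewrite /S2 M4_tr M4_one; m4]. Qed.
Lemma fc : S3^T *m X *m S3 \in H.
Proof. by apply: hinV; [exact: zclV_c | rewrite /S3 M4_tr M4_one; m4]. Qed.
Lemma fac : S13^T *m X *m S13 \in H.
Proof. by apply: hinV; [exact: zclV_ac | rewrite /S13 M4_tr M4_one; m4]. Qed.
Lemma fbc : S23^T *m X *m S23 \in H.
Proof. by apply: hinV; [exact: zclV_bc | rewrite /S23 M4_tr M4_one; m4]. Qed.
Lemma fv : S123^T *m X *m S123 \in H.
Proof. by apply: hinV; [exact: zclV_v | rewrite /S123 M4_tr M4_one; m4]. Qed.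

Lemma fX : X \in H.
Proof. by have := fe; rewrite (_ : I4^T *m X *m I4 = X) // /I4 M4_tr; m4. Qed.

Ltac ent := rewrite ?M4_tr !M4_mul M4E /=; ring.

Lemma outV1 (g gi : 'M4) : \det g = 1 -> g *m gi = 1%:M -> g o3 o1 != 0 -> gi *m X *m g \in H -> False.
Proof. by apply: (hess_out hiff) => g' hg'; have [] := cellV_entry hu hg'. Qed.
Lemma outV2 (g gi : 'M4) : \det g = 1 -> g *m gi = 1%:M -> g o2 o0 != 0 -> gi *m X *m g \in H -> False.
Proof. by apply: (hess_out hiff) => g' hg'; have [] := cellV_entry hu hg'. Qed.

Lemma h41_of : [|| a41 != 0, a31 != 0, a21 != 0, a42 != 0, a32 != 0 | a12 != 0] -> E41 \in H.
Proof.
case/or3P => [h|h|/or4P [h|h|h|h]].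
- by apply: (from_grad fe (i := o3) (j := o0) (c := a41)) => //; [rewrite /I4; ent | exact: dE41].
- apply: (from_grad fc (i := o3) (j := o0) (c := - a31)) => //; [rewrite /S3; ent | by rewrite oppr_eq0 | exact: dE41].
- by apply: (from_grad fbc (i := o3) (j := o0) (c := a21)) => //; [rewrite /S23; ent | exact: dE41].
- by apply: (from_grad fa (i := o3) (j := o0) (c := a42)) => //; [rewrite /S1; ent | exact: dE41].
- apply: (from_grad fac (i := o3) (j := o0) (c := - a32)) => //; [rewrite /S13; ent | by rewrite oppr_eq0 | exact: dE41].
- apply: (from_grad fv (i := o3) (j := o0) (c := - a12)) => //; [rewrite /S123; ent | by rewrite oppr_eq0 | exact: dE41].
Qed.

Ltac unE := rewrite /E11 /E12 /E13 /E14 /E21 /E22 /E23 /E24 /E31 /E32 /E33 /E34 /E41 /E42 /E43 /E44.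
Ltac br b h := apply: (brkE hH b h); unE; m4.

Lemma caseI : [|| a41 != 0, a31 != 0, a21 != 0, a42 != 0, a32 != 0 | a12 != 0] -> False.
Proof.
move/h41_of => h41.
have h42 : E42 \in H by rewrite -rpredN; br bE12 h41.
have h43 : E43 \in H by rewrite -rpredN; br bE13 h41.
have d14 : E11 - E44 \in H by br bE14 h41.
have h21 : E21 \in H by br bE24 h41.
have h31 : E31 \in H by br bE34 h41.
have d24 : E22 - E44 \in H by br bE24 h42.
have h32 : E32 \in H by br bE34 h42.
have d34 : E33 - E44 \in H by br bE34 h43.
have h12 : E12 \in H by rewrite -rpredN; br bE12 d14.
have h13 : E13 \in H by rewrite -rpredN; br bE13 d14.
have h14 : E14 \in H by apply: (scale_cancel nz2); br bE14 d14.
have h23 : E23 \in H by rewrite -rpredN; br bE23 d24.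
have h24 : E24 \in H by apply: (scale_cancel nz2); br bE24 d24.
have h34 : E34 \in H by apply: (scale_cancel nz2); br bE34 d34.
have hall := full_H h12 h13 h14 h21 h23 h24 h31 h32 h34 h41 h42 h43 d14 d24 d34.
apply: (outV1 (g := G32) (gi := G32^T)) => //.
- exact: det_G32.
- by rewrite /G32 M4_tr M4_one; m4.
- by rewrite /G32 M4E /= oner_eq0.
apply: hall; rewrite /G32 M4_tr !M4_mul tr_M4 -[RHS]htr; ring.
Qed.

Lemma L2_H : E12 \in H -> E13 \in H -> E14 \in H -> E23 \in H -> E24 \in H ->
  E34 \in H -> E32 \in H -> E42 \in H -> E43 \in H -> E22 - E44 \in H -> E33 - E44 \in H ->
  forall A : 'M4, A o0 o0 = 0 -> A o1 o0 = 0 -> A o2 o0 = 0 -> A o3 o0 = 0 -> \tr A = 0 -> A \in H.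
Proof.
move=> h12 h13 h14 h23 h24 h34 h32 h42 h43 d2 d3 A z1 z2 z3 z4 trA.
have e : A o3 o3 = - (A o1 o1 + A o2 o2).
  by move: trA; rewrite {1}(M4_eta A) tr_M4 z1 => trA; rewrite -[RHS]addr0 -trA; ring.
have -> : A = A o0 o1 *: E12 + A o0 o2 *: E13 + A o0 o3 *: E14 + A o1 o2 *: E23 + A o1 o3 *: E24
  + A o2 o3 *: E34 + A o2 o1 *: E32 + A o3 o1 *: E42 + A o3 o2 *: E43 + A o1 o1 *: (E22 - E44)
  + A o2 o2 *: (E33 - E44).
  unE; apply: (etrans (M4_eta A)); rewrite z1 z2 z3 z4 e; m4.
by rewrite !rpredD ?rpredZ.
Qed.

Lemma h42_of : [|| a13 != 0, a23 != 0 | a43 != 0] -> E42 \in H.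
Proof.
case/or3P => h.
- apply: (from_grad fv (i := o3) (j := o1) (c := - a13)) => //; [rewrite /S123; ent | by rewrite oppr_eq0 | exact: dE42].
- by apply: (from_grad fbc (i := o3) (j := o1) (c := a23)) => //; [rewrite /S23; ent | exact: dE42].
- by apply: (from_grad fb (i := o3) (j := o1) (c := a43)) => //; [rewrite /S2; ent | exact: dE42].
Qed.

Lemma caseII : a21 = 0 -> a31 = 0 -> a41 = 0 -> [|| a13 != 0, a23 != 0 | a43 != 0] -> False.
Proof.
move=> z21 z31 z41 /h42_of h42.
have h12 : E12 \in H by br bE14 h42.
have d24 : E22 - E44 \in H by br bE24 h42.
have h32 : E32 \in H by br bE34 h42.
have h43 : E43 \in H by rewrite -rpredN; br bE23 h42.
have d23 : E22 - E33 \in H by br bE23 h32.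
have h34 : E34 \in H by rewrite -rpredN; br bE24 h32.
have d34 : E33 - E44 \in H by br bE34 h43.
have h13 : E13 \in H by rewrite -rpredN; br bE13 d23.
have h14 : E14 \in H by rewrite -rpredN; br bE14 d24.
have h23 : E23 \in H by apply: (scale_cancel nz2); br bE23 d23.
have h24 : E24 \in H by apply: (scale_cancel nz2); br bE24 d24.
have hL := L2_H h12 h13 h14 h23 h24 h34 h32 h42 h43 d24 d34.
apply: (outV1 (g := G32) (gi := G32^T)) => //.
- exact: det_G32.
- by rewrite /G32 M4_tr M4_one; m4.
- by rewrite /G32 M4E /= oner_eq0.
rewrite -[_ *m G32](addrNK X) rpredD ?fX //.
apply: hL; rewrite /G32 ?M4_tr ?(M4_mul, M4_opp, M4_add) ?M4E /= ?tr_M4 ?z21 ?z31 ?z41; ring.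
Qed.

Lemma caseIII : a12 = 0 -> a13 = 0 -> a21 = 0 -> a23 = 0 -> a31 = 0 -> a32 = 0 ->
  a41 = 0 -> a42 = 0 -> a43 = 0 -> False.
Proof.
move=> z12 z13 z21 z23 z31 z32 z41 z42 z43.
have c4 : forall c, c = a14 \/ c = a24 \/ c = a34 ->
    [/\ c *: E14 \in H, c *: E24 \in H & c *: E34 \in H].
  move=> c hc; case: (eqVneq c 0) => [->|cn0]; first by rewrite !scale0r !rpred0.
  have h43 : E43 \in H.
    case: hc => [e|[e|e]]; rewrite e in cn0.
    - apply: (from_grad fv (i := o3) (j := o2) (c := - a14)) => //; [rewrite /S123; ent | by rewrite oppr_eq0 | exact: dE43].
    - by apply: (from_grad fbc (i := o3) (j := o2) (c := a24)) => //; [rewrite /S23; ent | exact: dE43].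
    - apply: (from_grad fc (i := o3) (j := o2) (c := - a34)) => //; [rewrite /S3; ent | by rewrite oppr_eq0 | exact: dE43].
  have d34 : E33 - E44 \in H by br bE34 h43.
  have h14 : E14 \in H by rewrite -rpredN; br bE14 d34.
  have h24 : E24 \in H by rewrite -rpredN; br bE24 d34.
  have h34 : E34 \in H by apply: (scale_cancel nz2); br bE34 d34.
  by split; apply: rpredZ.
have diag_of : forall P, P^T *m X *m P \in H -> diag_mx (\row_i (P^T *m X *m P) i i) \in H.
  by move=> P hP; apply: grad_diag.
have dX : M4 a11 0 0 0 0 a22 0 0 0 0 a33 0 0 0 0 a44 \in H.
  by have := diag_of _ fe; rewrite diag_M4 /I4 ?M4_tr !M4_mul !M4E /=; congr (_ \in H); f_equal; ring.
have dA : M4 a22 0 0 0 0 a11 0 0 0 0 a33 0 0 0 0 a44 \in H.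
  by have := diag_of _ fa; rewrite diag_M4 /S1 ?M4_tr !M4_mul !M4E /=; congr (_ \in H); f_equal; ring.
have dB : M4 a11 0 0 0 0 a33 0 0 0 0 a22 0 0 0 0 a44 \in H.
  by have := diag_of _ fb; rewrite diag_M4 /S2 ?M4_tr !M4_mul !M4E /=; congr (_ \in H); f_equal; ring.
have dC : M4 a11 0 0 0 0 a22 0 0 0 0 a44 0 0 0 0 a33 \in H.
  by have := diag_of _ fc; rewrite diag_M4 /S3 ?M4_tr !M4_mul !M4E /=; congr (_ \in H); f_equal; ring.
have dBC : M4 a11 0 0 0 0 a33 0 0 0 0 a44 0 0 0 0 a22 \in H.
  by have := diag_of _ fbc; rewrite diag_M4 /S23 ?M4_tr !M4_mul !M4E /=; congr (_ \in H); f_equal; ring.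
have k12 : (a22 - a11) *: (E11 - E22) \in H.
  by have -> : (a22 - a11) *: (E11 - E22) = M4 a22 0 0 0 0 a11 0 0 0 0 a33 0 0 0 0 a44 - M4 a11 0 0 0 0 a22 0 0 0 0 a33 0 0 0 0 a44;
    [unE; m4 | rewrite rpredB].
have k23 : (a33 - a22) *: (E22 - E33) \in H.
  by have -> : (a33 - a22) *: (E22 - E33) = M4 a11 0 0 0 0 a33 0 0 0 0 a22 0 0 0 0 a44 - M4 a11 0 0 0 0 a22 0 0 0 0 a33 0 0 0 0 a44;
    [unE; m4 | rewrite rpredB].
have k34 : (a44 - a33) *: (E33 - E44) \in H.
  by have -> : (a44 - a33) *: (E33 - E44) = M4 a11 0 0 0 0 a22 0 0 0 0 a44 0 0 0 0 a33 - M4 a11 0 0 0 0 a22 0 0 0 0 a33 0 0 0 0 a44;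
    [unE; m4 | rewrite rpredB].
have key : (a33 - a11) *: (E11 - E22) \in H \/ (a11 = 0 /\ a22 = 0 /\ a33 != 0).
  case: (eqVneq a11 a22) => [e12|n12].
  - case: (eqVneq a33 a11) => [e31|n31]; first by left; rewrite e31 subrr scale0r rpred0.
    have h23 : E22 - E33 \in H.
      by apply: (scale_cancel (c := a33 - a22)); [rewrite subr_eq0 -e12 | exact: k23].
    case: (eqVneq a11 0) => [z11|nz11]; first by right; move: n31; rewrite -e12 z11 => n31; do !split.
    left; apply: rpredZ.
    case: (eqVneq a33 a44) => [e34|n34].
    + apply: (scale_cancel (c := 2 * a11)); first by rewrite mulf_neq0 // pnatr_eq0.
      have -> : (2 * a11) *: (E11 - E22) = M4 a11 0 0 0 0 a33 0 0 0 0 a44 0 0 0 0 a22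
          + M4 a11 0 0 0 0 a22 0 0 0 0 a33 0 0 0 0 a44 - (2 * a11) *: (E22 - E33).
        have e33 : a33 = - a11 by apply: (mulfI (x := 2 : CC)); [rewrite pnatr_eq0 | rewrite -[RHS]addr0 -htr -e12 -e34; ring].
        by rewrite -e12 -e34 e33; unE; m4.
      by apply: rpredB; [apply: rpredD; [exact: dBC | exact: dX] | apply: rpredZ; exact: h23].
    + have h34 : E33 - E44 \in H by apply: (scale_cancel (c := a44 - a33)); [rewrite subr_eq0 eq_sym | exact: k34].
      apply: (scale_cancel nz11).
      have -> : a11 *: (E11 - E22) = M4 a11 0 0 0 0 a22 0 0 0 0 a33 0 0 0 0 a44
          - (2 * a11) *: (E22 - E33) - (2 * a11 + a33) *: (E33 - E44).
        have e44 : a44 = - (2 * a11 + a33) by rewrite -[RHS]addr0 -htr -e12; ring.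
        by rewrite -e12 e44; unE; m4.
      by apply: rpredB; [apply: rpredB; [exact: dX | apply: rpredZ; exact: h23] | apply: rpredZ; exact: h34].
  - left; apply: rpredZ; apply: (scale_cancel (c := a22 - a11)); [by rewrite subr_eq0 eq_sym | exact: k12].
case: key => [k13|[z11 [z22 nz33]]].
  apply: (outV2 (g := G21) (gi := G21^T)) => //.
  - exact: det_G21.
  - by rewrite /G21 M4_tr M4_one; m4.
  - by rewrite /G21 M4E /= oner_eq0.
  have [p14 p24 p34] := c4 a14 (or_introl erefl).
  have [q14 q24 q34] := c4 a24 (or_intror (or_introl erefl)).
  have [r14 r24 r34] := c4 a34 (or_intror (or_intror erefl)).
  have -> : G21^T *m X *m G21 = X + (a33 - a11) *: (E11 - E22) + (a33 - a22) *: (E22 - E33)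
     - a14 *: E24 - a24 *: E34 + a34 *: E14 - a14 *: E14 - a24 *: E24 - a34 *: E34.
    by rewrite /G21 z12 z13 z21 z23 z31 z32 z41 z42 z43; unE; rewrite M4_tr; m4.
  apply: rpredB; last exact: r34.
  apply: rpredB; last exact: q24.
  apply: rpredB; last exact: p14.
  apply: rpredD; last exact: r14.
  apply: rpredB; last exact: q34.
  apply: rpredB; last exact: p24.
  apply: rpredD; last exact: k23.
  apply: rpredD; [exact: fX | exact: k13].
have e44 : a44 = - a33 by rewrite -[RHS]addr0 -htr z11 z22; ring.
pose n1 := a14 / a33; pose n2 := a24 / a33; pose n3 := a34 / (2 * a33).
pose bm := M4 1 0 0 (- n1) 0 1 0 (- n2) 0 0 1 (- n3) 0 0 0 1.
pose bp := M4 1 0 0 n1 0 1 0 n2 0 0 1 n3 0 0 0 1.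
have ubm : inB bm by split; [exact: upper_M4 | rewrite /inSL det_M4_upper; ring].
have nz2a : 2 * a33 != 0 by rewrite mulf_neq0 // pnatr_eq0.
have f1 : (S2^T *m bp) *m X *m (bm *m S2) \in H.
  apply: (hess_in hiff); first exact: zclV_b.
  by rewrite /bm /bp /S2 M4_tr M4_one; m4.
have e1 : (S2^T *m bp) *m X *m (bm *m S2) = a33 *: (E22 - E44).
  by rewrite /bm /bp /n1 /n2 /n3 /S2 z11 z22 e44 z12 z13 z21 z23 z31 z32 z41 z42 z43; unE; rewrite M4_tr; m4f.
apply: (outV1 (g := bm *m G32) (gi := G32^T *m bp)).
- by rewrite det_mulmx det_G32 det_M4_upper; ring.
- by rewrite /bm /bp /G32 M4_tr M4_one; m4.
- by rewrite /bm /G32 M4_mul M4E /=; rewrite (_ : _ + _ = 1) ?oner_eq0 //; ring.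
have -> : (G32^T *m bp) *m X *m (bm *m G32) = - (a33 *: (E22 - E44)).
  by rewrite /bm /bp /n1 /n2 /n3 /G32 z11 z22 e44 z12 z13 z21 z23 z31 z32 z41 z42 z43; unE; rewrite M4_tr; m4f.
by rewrite rpredN -e1; exact: f1.
Qed.

Lemma mainV : False.
Proof.
case: (eqVneq a41 0) => [z41|n]; last by apply: caseI; rewrite n.
case: (eqVneq a31 0) => [z31|n]; last by apply: caseI; rewrite n orbT.
case: (eqVneq a21 0) => [z21|n]; last by apply: caseI; rewrite n !orbT.
case: (eqVneq a42 0) => [z42|n]; last by apply: caseI; rewrite n !orbT.
case: (eqVneq a32 0) => [z32|n]; last by apply: caseI; rewrite n !orbT.
case: (eqVneq a12 0) => [z12|n]; last by apply: caseI; rewrite n !orbT.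
case: (eqVneq a13 0) => [z13|n]; last by apply: (caseII z21 z31 z41); rewrite n.
case: (eqVneq a23 0) => [z23|n]; last by apply: (caseII z21 z31 z41); rewrite n orbT.
case: (eqVneq a43 0) => [z43|n]; last by apply: (caseII z21 z31 z41); rewrite n !orbT.
exact: caseIII.
Qed.

End MainV.

End MV.
Import MV.

Definition PW : 'M4 := M4 0 1 0 0 0 0 1 0 0 0 0 1 1 0 0 0.
Definition S321 : 'M4 := M4 0 (-1) 0 0 0 0 (-1) 0 0 0 0 (-1) 1 0 0 0.

Lemma det_PW : \det PW = -1.
Proof.
have e : S321 = M4 (-1) 0 0 0 0 1 0 0 0 0 1 0 0 0 0 1 *m PW *m M4 1 0 0 0 0 1 0 0 0 0 (-1) 0 0 0 0 (-1).
  by rewrite /S321 /PW; m4.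
have : \det S321 = 1.
  have -> : S321 = S3 *m S2 *m S1 by rewrite /S321 /S3 /S2 /S1; m4.
  by rewrite !det_mulmx det_S1 det_S2 det_S3 !mulr1.
rewrite e !det_mulmx !det_M4_upper => h.
have -> : \det PW = - ((-1 * 1 * 1 * 1) * \det PW * (1 * 1 * (-1) * (-1))) by ring.
by rewrite h.
Qed.

Definition m1 (g : 'M4) := g o1 o0 * g o2 o1 - g o1 o1 * g o2 o0.
Definition m2 (g : 'M4) := g o2 o1 * g o3 o2 - g o2 o2 * g o3 o1.

Lemma polyfun_m1 : polyfun m1.
Proof.
apply: (polyfun_ext (f := fun g : 'M4 => g o1 o0 * g o2 o1 + (-1) * (g o1 o1 * g o2 o0))).
  by move=> g; rewrite /m1 mulN1r.
by repeat constructor.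
Qed.

Lemma polyfun_m2 : polyfun m2.
Proof.
apply: (polyfun_ext (f := fun g : 'M4 => g o2 o1 * g o3 o2 + (-1) * (g o2 o2 * g o3 o1))).
  by move=> g; rewrite /m2 mulN1r.
by repeat constructor.
Qed.

Lemma cellW_entry (u : 'S_4) (hu : perm_matrix u = PW) (g : 'M4) :
  bruhat_cell u g -> m1 g = 0 /\ m2 g = 0.
Proof.
move=> [b1 [b2 [wd [[ub1 _] [[ub2 _] [[_ [c ->]] ->]]]]]].
rewrite hu (M4_eta b1) (M4_eta b2) /PW /m1 /m2.
rewrite [b1 o1 o0]ub1 // [b1 o2 o0]ub1 // [b1 o3 o0]ub1 // [b1 o2 o1]ub1 // [b1 o3 o1]ub1 // [b1 o3 o2]ub1 //.
rewrite [b2 o1 o0]ub2 // [b2 o2 o0]ub2 // [b2 o3 o0]ub2 // [b2 o2 o1]ub2 // [b2 o3 o1]ub2 // [b2 o3 o2]ub2 //.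
rewrite M4_scale !M4_mul !M4E /=; split; ring.
Qed.

Definition gamW_e (t : CC) : 'M4 := M4 1 0 0 0 (t) 1 0 0 (t ^+ 2) (t) 1 0 (t ^+ 3) (t ^+ 2) (t) 1.
Definition b1W_e (t : CC) : 'M4 := M4 (-1) 0 0 ((t ^+ 3)^-1) 0 1 0 ((t ^+ 2)^-1) 0 0 1 (t^-1) 0 0 0 1.
Definition b2W_e (t : CC) : 'M4 := M4 (t ^+ 3) (t ^+ 2) (t) 1 0 (t^-1) ((t ^+ 2)^-1) ((t ^+ 3)^-1) 0 0 (- t^-1) (- (t ^+ 2)^-1) 0 0 0 (- t^-1).
Definition gamW_a (t : CC) : 'M4 := M4 1 0 0 0 (t) 1 0 0 0 0 0 (-1) (t ^+ 2) (t) 1 0.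
Definition b1W_a (t : CC) : 'M4 := M4 (-1) 0 0 ((t ^+ 2)^-1) 0 1 0 (t^-1) 0 0 1 0 0 0 0 1.
Definition b2W_a (t : CC) : 'M4 := M4 (t ^+ 2) (t) 1 0 0 (t^-1) ((t ^+ 2)^-1) 0 0 0 (- t^-1) 0 0 0 0 (-1).
Definition gamW_b (t : CC) : 'M4 := M4 1 0 0 0 0 0 (-1) 0 (t) 1 0 0 (t ^+ 2) (t) 0 1.
Definition b1W_b (t : CC) : 'M4 := M4 (-1) 0 0 ((t ^+ 2)^-1) 0 1 0 0 0 0 1 (t^-1) 0 0 0 1.
Definition b2W_b (t : CC) : 'M4 := M4 (t ^+ 2) (t) 0 1 0 (t^-1) 0 ((t ^+ 2)^-1) 0 0 (-1) 0 0 0 0 (- t^-1).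
Definition gamW_c (t : CC) : 'M4 := M4 0 (-1) 0 0 1 0 0 0 (t) 0 1 0 (t ^+ 2) 0 (t) 1.
Definition b1W_c (t : CC) : 'M4 := M4 (-1) 0 0 0 0 1 0 ((t ^+ 2)^-1) 0 0 1 (t^-1) 0 0 0 1.
Definition b2W_c (t : CC) : 'M4 := M4 (t ^+ 2) 0 (t) 1 0 1 0 0 0 0 (- t^-1) (- (t ^+ 2)^-1) 0 0 0 (- t^-1).
Definition gamW_ac (t : CC) : 'M4 := M4 0 (-1) 0 0 1 0 0 0 0 0 0 (-1) (t) 0 1 0.
Definition b1W_ac (t : CC) : 'M4 := M4 (-1) 0 0 0 0 1 0 (t^-1) 0 0 1 0 0 0 0 1.
Definition b2W_ac (t : CC) : 'M4 := M4 (t) 0 1 0 0 1 0 0 0 0 (- t^-1) 0 0 0 0 (-1).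
Definition gamW_bc (t : CC) : 'M4 := M4 0 (-1) 0 0 0 0 (-1) 0 1 0 0 0 (t) 0 0 1.
Definition b1W_bc (t : CC) : 'M4 := M4 (-1) 0 0 0 0 1 0 0 0 0 1 (t^-1) 0 0 0 1.
Definition b2W_bc (t : CC) : 'M4 := M4 (t) 0 0 1 0 1 0 0 0 0 (-1) 0 0 0 0 (- t^-1).

Section ZW.
Variable (u : 'S_4).
Hypothesis hu : perm_matrix u = PW.

Lemma zclW_e b : inB b -> zclosure (bruhat_cell u) (b *m I4).
Proof.
move=> hb; have -> : I4 = gamW_e 0 by rewrite /I4 /gamW_e; f_equal; ring.
apply: (zcl_curve hu det_PW hb (b1 := b1W_e) (b2 := b2W_e)).
- by rewrite /gamW_e; apply: pexpr_M4; pex.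
- by move=> t tn0; rewrite /gamW_e /b1W_e /b2W_e /PW !M4_mul; f_equal; field.
- by move=> t tn0; split; rewrite /b1W_e /b2W_e ?det_M4_upper; try exact: upper_M4; field.
Qed.

Lemma zclW_a b : inB b -> zclosure (bruhat_cell u) (b *m S3).
Proof.
move=> hb; have -> : S3 = gamW_a 0 by rewrite /S3 /gamW_a; f_equal; ring.
apply: (zcl_curve hu det_PW hb (b1 := b1W_a) (b2 := b2W_a)).
- by rewrite /gamW_a; apply: pexpr_M4; pex.
- by move=> t tn0; rewrite /gamW_a /b1W_a /b2W_a /PW !M4_mul; f_equal; field.
- by move=> t tn0; split; rewrite /b1W_a /b2W_a ?det_M4_upper; try exact: upper_M4; field.
Qed.

Lemma zclW_b b : inB b -> zclosure (bruhat_cell u) (b *m S2).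
Proof.
move=> hb; have -> : S2 = gamW_b 0 by rewrite /S2 /gamW_b; f_equal; ring.
apply: (zcl_curve hu det_PW hb (b1 := b1W_b) (b2 := b2W_b)).
- by rewrite /gamW_b; apply: pexpr_M4; pex.
- by move=> t tn0; rewrite /gamW_b /b1W_b /b2W_b /PW !M4_mul; f_equal; field.
- by move=> t tn0; split; rewrite /b1W_b /b2W_b ?det_M4_upper; try exact: upper_M4; field.
Qed.

Lemma zclW_c b : inB b -> zclosure (bruhat_cell u) (b *m S1).
Proof.
move=> hb; have -> : S1 = gamW_c 0 by rewrite /S1 /gamW_c; f_equal; ring.
apply: (zcl_curve hu det_PW hb (b1 := b1W_c) (b2 := b2W_c)).
- by rewrite /gamW_c; apply: pexpr_M4; pex.
- by move=> t tn0; rewrite /gamW_c /b1W_c /b2W_c /PW !M4_mul; f_equal; field.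
- by move=> t tn0; split; rewrite /b1W_c /b2W_c ?det_M4_upper; try exact: upper_M4; field.
Qed.

Lemma zclW_ac b : inB b -> zclosure (bruhat_cell u) (b *m S13).
Proof.
move=> hb; have -> : S13 = gamW_ac 0 by rewrite /S13 /gamW_ac; f_equal; ring.
apply: (zcl_curve hu det_PW hb (b1 := b1W_ac) (b2 := b2W_ac)).
- by rewrite /gamW_ac; apply: pexpr_M4; pex.
- by move=> t tn0; rewrite /gamW_ac /b1W_ac /b2W_ac /PW !M4_mul; f_equal; field.
- by move=> t tn0; split; rewrite /b1W_ac /b2W_ac ?det_M4_upper; try exact: upper_M4; field.
Qed.

Lemma zclW_bc b : inB b -> zclosure (bruhat_cell u) (b *m G21).
Proof.
move=> hb; have -> : G21 = gamW_bc 0 by rewrite /G21 /gamW_bc; f_equal; ring.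
apply: (zcl_curve hu det_PW hb (b1 := b1W_bc) (b2 := b2W_bc)).
- by rewrite /gamW_bc; apply: pexpr_M4; pex.
- by move=> t tn0; rewrite /gamW_bc /b1W_bc /b2W_bc /PW !M4_mul; f_equal; field.
- by move=> t tn0; split; rewrite /b1W_bc /b2W_bc ?det_M4_upper; try exact: upper_M4; field.
Qed.
End ZW.

Module MW.

Definition G12 : 'M4 := M4 0 0 1 0 1 0 0 0 0 1 0 0 0 0 0 1.

Lemma det_G12 : \det G12 = 1.
Proof. have -> : G12 = S1 *m S2 by rewrite /G12 /S1 /S2; m4. by rewrite det_mulmx det_S1 det_S2 mulr1. Qed.
Lemma det_S23 : \det S23 = 1.
Proof. have -> : S23 = S2 *m S3 by rewrite /S23 /S2 /S3; m4. by rewrite det_mulmx det_S2 det_S3 mulr1. Qed.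

Lemma hess_out_f (u : 'S_4) (x : 'M4) (H : {vspace 'M4}) (P Pi : 'M4) (f : 'M4 -> CC) :
  (forall g, in_hess x H g <-> in_schubert u g) -> polyfun f ->
  (forall g, bruhat_cell u g -> f g = 0) ->
  \det P = 1 -> P *m Pi = 1%:M -> f P != 0 -> Pi *m x *m P \in H -> False.
Proof.
move=> hiff pf hc dP hP nz hin.
have hh : in_hess x H P by split; [exact: dP | rewrite (invmx_eq hP)].
have [_ hz] := proj1 (hiff P) hh.
by move/eqP: (hz f pf hc); rewrite (negPf nz).
Qed.

Section MainW.
Variable (u : 'S_4).
Hypothesis hu : perm_matrix u = PW.
Variables (a11 a12 a13 a14 a21 a22 a23 a24 a31 a32 a33 a34 a41 a42 a43 a44 : CC).
Local Notation X := (M4 a11 a12 a13 a14 a21 a22 a23 a24 a31 a32 a33 a34 a41 a42 a43 a44).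
Variable H : {vspace 'M4}.
Hypothesis hH : hessenberg_space H.
Hypothesis htr : a11 + a22 + a33 + a44 = 0.
Hypothesis hiff : forall g, in_hess X H g <-> in_schubert u g.

Lemma zclW_v b : inB b -> zclosure (bruhat_cell u) (b *m S321).
Proof.
move=> hb f _ hf; apply: hf; apply: cell_leftB => //.
have -> : S321 = M4 (-1) 0 0 0 0 1 0 0 0 0 1 0 0 0 0 1 *m PW *m M4 1 0 0 0 0 1 0 0 0 0 (-1) 0 0 0 0 (-1).
  by rewrite /S321 /PW; m4.
apply: (cell_gen hu det_PW); try exact: upper_M4; by rewrite det_M4_upper; ring.
Qed.

Lemma hinW P : (forall b, inB b -> zclosure (bruhat_cell u) (b *m P)) -> P *m P^T = 1%:M ->
  P^T *m X *m P \in H.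
Proof.
by move=> hz hP; apply: (hess_in hiff) => //; have := hz _ inB1; rewrite mul1mx.
Qed.

Lemma from_gradW (A : 'M4) (i j : 'I_4) (c : CC) (M : 'M4) : A \in H -> i != j ->
  A i j = c -> c != 0 -> delta_mx i j = M -> M \in H.
Proof.
move=> hA ij hc cn0 hM; have := grad_off hH hA ij.
by rewrite hc hM; apply: scale_cancel.
Qed.

Lemma fe : I4^T *m X *m I4 \in H.
Proof. by apply: hinW; [exact: zclW_e | rewrite /I4 M4_tr M4_one; m4]. Qed.
Lemma fa3 : S3^T *m X *m S3 \in H.
Proof. by apply: hinW; [exact: zclW_a | rewrite /S3 M4_tr M4_one; m4]. Qed.
Lemma fb : S2^T *m X *m S2 \in H.
Proof. by apply: hinW; [exact: zclW_b | rewrite /S2 M4_tr M4_one; m4]. Qed.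
Lemma fc1 : S1^T *m X *m S1 \in H.
Proof. by apply: hinW; [exact: zclW_c | rewrite /S1 M4_tr M4_one; m4]. Qed.
Lemma fac : S13^T *m X *m S13 \in H.
Proof. by apply: hinW; [exact: zclW_ac | rewrite /S13 M4_tr M4_one; m4]. Qed.
Lemma fbc : G21^T *m X *m G21 \in H.
Proof. by apply: hinW; [exact: zclW_bc | rewrite /G21 M4_tr M4_one; m4]. Qed.
Lemma fv : S321^T *m X *m S321 \in H.
Proof. by apply: hinW; [exact: zclW_v | rewrite /S321 M4_tr M4_one; m4]. Qed.

Lemma fX : X \in H.
Proof. by have := fe; rewrite (_ : I4^T *m X *m I4 = X) // /I4 M4_tr; m4. Qed.

Ltac ent := rewrite ?M4_tr !M4_mul M4E /=; ring.
Ltac unE := rewrite /E11 /E12 /E13 /E14 /E21 /E22 /E23 /E24 /E31 /E32 /E33 /E34 /E41 /E42 /E43 /E44.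
Ltac br b h := apply: (brkE hH b h); unE; m4.

Lemma outW1 (g gi : 'M4) : \det g = 1 -> g *m gi = 1%:M -> m1 g != 0 -> gi *m X *m g \in H -> False.
Proof. by apply: (hess_out_f hiff polyfun_m1) => g' hg'; have [] := cellW_entry hu hg'. Qed.
Lemma outW2 (g gi : 'M4) : \det g = 1 -> g *m gi = 1%:M -> m2 g != 0 -> gi *m X *m g \in H -> False.
Proof. by apply: (hess_out_f hiff polyfun_m2) => g' hg'; have [] := cellW_entry hu hg'. Qed.

Lemma h41_of : [|| a41 != 0, a42 != 0, a31 != 0, a32 != 0, a43 != 0 | a34 != 0] -> E41 \in H.
Proof.
case/or3P => [h|h|/or4P [h|h|h|h]].
- by apply: (from_gradW fe (i := o3) (j := o0) (c := a41)) => //; [rewrite /I4; ent | exact: dE41].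
- by apply: (from_gradW fc1 (i := o3) (j := o0) (c := a42)) => //; [rewrite /S1; ent | exact: dE41].
- apply: (from_gradW fa3 (i := o3) (j := o0) (c := - a31)) => //; [rewrite /S3; ent | by rewrite oppr_eq0 | exact: dE41].
- apply: (from_gradW fac (i := o3) (j := o0) (c := - a32)) => //; [rewrite /S13; ent | by rewrite oppr_eq0 | exact: dE41].
- by apply: (from_gradW fbc (i := o3) (j := o0) (c := a43)) => //; [rewrite /G21; ent | exact: dE41].
- apply: (from_gradW fv (i := o3) (j := o0) (c := - a34)) => //; [rewrite /S321; ent | by rewrite oppr_eq0 | exact: dE41].
Qed.

Lemma caseI : [|| a41 != 0, a42 != 0, a31 != 0, a32 != 0, a43 != 0 | a34 != 0] -> False.
Proof.
move/h41_of => h41.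
have h42 : E42 \in H by rewrite -rpredN; br bE12 h41.
have h43 : E43 \in H by rewrite -rpredN; br bE13 h41.
have d14 : E11 - E44 \in H by br bE14 h41.
have h21 : E21 \in H by br bE24 h41.
have h31 : E31 \in H by br bE34 h41.
have d24 : E22 - E44 \in H by br bE24 h42.
have h32 : E32 \in H by br bE34 h42.
have d34 : E33 - E44 \in H by br bE34 h43.
have h12 : E12 \in H by rewrite -rpredN; br bE12 d14.
have h13 : E13 \in H by rewrite -rpredN; br bE13 d14.
have h14 : E14 \in H by apply: (scale_cancel nz2); br bE14 d14.
have h23 : E23 \in H by rewrite -rpredN; br bE23 d24.
have h24 : E24 \in H by apply: (scale_cancel nz2); br bE24 d24.
have h34 : E34 \in H by apply: (scale_cancel nz2); br bE34 d34.
have hall := full_H h12 h13 h14 h21 h23 h24 h31 h32 h34 h41 h42 h43 d14 d24 d34.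
apply: (outW1 (g := G12) (gi := G12^T)).
- exact: det_G12.
- by rewrite /G12 M4_tr M4_one; m4.
- by rewrite /G12 /m1 !M4E /= (_ : _ - _ = 1) ?oner_eq0 //; ring.
apply: hall; rewrite /G12 M4_tr !M4_mul tr_M4 -[RHS]htr; ring.
Qed.

Lemma L2W_H : E12 \in H -> E13 \in H -> E14 \in H -> E21 \in H -> E23 \in H -> E24 \in H ->
  E31 \in H -> E32 \in H -> E34 \in H -> E11 - E33 \in H -> E22 - E33 \in H ->
  forall A : 'M4, A o3 o0 = 0 -> A o3 o1 = 0 -> A o3 o2 = 0 -> A o3 o3 = 0 -> \tr A = 0 -> A \in H.
Proof.
move=> h12 h13 h14 h21 h23 h24 h31 h32 h34 d1 d2 A z1 z2 z3 z4 trA.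
have e : A o2 o2 = - (A o0 o0 + A o1 o1).
  by move: trA; rewrite {1}(M4_eta A) tr_M4 z4 => trA; rewrite -[RHS]addr0 -trA; ring.
have -> : A = A o0 o1 *: E12 + A o0 o2 *: E13 + A o0 o3 *: E14 + A o1 o0 *: E21 + A o1 o2 *: E23
  + A o1 o3 *: E24 + A o2 o0 *: E31 + A o2 o1 *: E32 + A o2 o3 *: E34 + A o0 o0 *: (E11 - E33)
  + A o1 o1 *: (E22 - E33).
  unE; apply: (etrans (M4_eta A)); rewrite z1 z2 z3 z4 e; m4.
by rewrite !rpredD ?rpredZ.
Qed.

Lemma h31_of : [|| a21 != 0, a23 != 0 | a24 != 0] -> E31 \in H.
Proof.
case/or3P => h.
- apply: (from_gradW fb (i := o2) (j := o0) (c := - a21)) => //; [rewrite /S2; ent | by rewrite oppr_eq0 | exact: dE31].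
- apply: (from_gradW fbc (i := o2) (j := o0) (c := - a23)) => //; [rewrite /G21; ent | by rewrite oppr_eq0 | exact: dE31].
- apply: (from_gradW fv (i := o2) (j := o0) (c := - a24)) => //; [rewrite /S321; ent | by rewrite oppr_eq0 | exact: dE31].
Qed.

Lemma caseII : a41 = 0 -> a42 = 0 -> a43 = 0 -> [|| a21 != 0, a23 != 0 | a24 != 0] -> False.
Proof.
move=> z41 z42 z43 /h31_of h31.
have h34 : E34 \in H by rewrite -rpredN; br bE14 h31.
have d13 : E11 - E33 \in H by br bE13 h31.
have h32 : E32 \in H by rewrite -rpredN; br bE12 h31.
have h21 : E21 \in H by br bE23 h31.
have d23 : E22 - E33 \in H by br bE23 h32.
have h12 : E12 \in H by br bE13 h32.
have h24 : E24 \in H by rewrite -rpredN; br bE24 d23.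
have h14 : E14 \in H by rewrite -rpredN; br bE14 d13.
have h23 : E23 \in H by apply: (scale_cancel nz2); br bE23 d23.
have h13 : E13 \in H by apply: (scale_cancel nz2); br bE13 d13.
have hL := L2W_H h12 h13 h14 h21 h23 h24 h31 h32 h34 d13 d23.
apply: (outW1 (g := G12) (gi := G12^T)).
- exact: det_G12.
- by rewrite /G12 M4_tr M4_one; m4.
- by rewrite /G12 /m1 !M4E /= (_ : _ - _ = 1) ?oner_eq0 //; ring.
rewrite -[_ *m G12](addrNK X) rpredD ?fX //.
apply: hL; rewrite /G12 ?M4_tr ?(M4_mul, M4_opp, M4_add) ?M4E /= ?tr_M4 ?z41 ?z42 ?z43; ring.
Qed.

Lemma caseIII : a41 = 0 -> a42 = 0 -> a31 = 0 -> a32 = 0 -> a43 = 0 -> a34 = 0 ->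
  a21 = 0 -> a23 = 0 -> a24 = 0 -> False.
Proof.
move=> z41 z42 z31 z32 z43 z34 z21 z23 z24.
have c4 : forall c, c = a12 \/ c = a13 \/ c = a14 ->
    [/\ c *: E12 \in H, c *: E13 \in H & c *: E14 \in H].
  move=> c hc; case: (eqVneq c 0) => [->|cn0]; first by rewrite !scale0r !rpred0.
  have h21 : E21 \in H.
    case: hc => [e|[e|e]]; rewrite e in cn0.
    - apply: (from_gradW fc1 (i := o1) (j := o0) (c := - a12)) => //; [rewrite /S1; ent | by rewrite oppr_eq0 | exact: dE21].
    - apply: (from_gradW fbc (i := o1) (j := o0) (c := - a13)) => //; [rewrite /G21; ent | by rewrite oppr_eq0 | exact: dE21].
    - apply: (from_gradW fv (i := o1) (j := o0) (c := - a14)) => //; [rewrite /S321; ent | by rewrite oppr_eq0 | exact: dE21].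
  have d12 : E11 - E22 \in H by br bE12 h21.
  have h13 : E13 \in H by rewrite -rpredN; br bE13 d12.
  have h14 : E14 \in H by rewrite -rpredN; br bE14 d12.
  have h12 : E12 \in H by apply: (scale_cancel nz2); br bE12 d12.
  by split; apply: rpredZ.
have diag_of : forall P, P^T *m X *m P \in H -> diag_mx (\row_i (P^T *m X *m P) i i) \in H.
  by move=> P hP; apply: grad_diag.
have dX : M4 a11 0 0 0 0 a22 0 0 0 0 a33 0 0 0 0 a44 \in H.
  by have := diag_of _ fe; rewrite diag_M4 /I4 ?M4_tr !M4_mul !M4E /=; congr (_ \in H); f_equal; ring.
have dA : M4 a22 0 0 0 0 a11 0 0 0 0 a33 0 0 0 0 a44 \in H.
  by have := diag_of _ fc1; rewrite diag_M4 /S1 ?M4_tr !M4_mul !M4E /=; congr (_ \in H); f_equal; ring.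
have dB : M4 a11 0 0 0 0 a33 0 0 0 0 a22 0 0 0 0 a44 \in H.
  by have := diag_of _ fb; rewrite diag_M4 /S2 ?M4_tr !M4_mul !M4E /=; congr (_ \in H); f_equal; ring.
have dC : M4 a11 0 0 0 0 a22 0 0 0 0 a44 0 0 0 0 a33 \in H.
  by have := diag_of _ fa3; rewrite diag_M4 /S3 ?M4_tr !M4_mul !M4E /=; congr (_ \in H); f_equal; ring.
have dG : M4 a33 0 0 0 0 a11 0 0 0 0 a22 0 0 0 0 a44 \in H.
  by have := diag_of _ fbc; rewrite diag_M4 /G21 ?M4_tr !M4_mul !M4E /=; congr (_ \in H); f_equal; ring.
have k12 : (a22 - a11) *: (E11 - E22) \in H.
  by have -> : (a22 - a11) *: (E11 - E22) = M4 a22 0 0 0 0 a11 0 0 0 0 a33 0 0 0 0 a44 - M4 a11 0 0 0 0 a22 0 0 0 0 a33 0 0 0 0 a44;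
    [unE; m4 | apply: rpredB; [exact: dA | exact: dX]].
have k23 : (a33 - a22) *: (E22 - E33) \in H.
  by have -> : (a33 - a22) *: (E22 - E33) = M4 a11 0 0 0 0 a33 0 0 0 0 a22 0 0 0 0 a44 - M4 a11 0 0 0 0 a22 0 0 0 0 a33 0 0 0 0 a44;
    [unE; m4 | apply: rpredB; [exact: dB | exact: dX]].
have k34 : (a44 - a33) *: (E33 - E44) \in H.
  by have -> : (a44 - a33) *: (E33 - E44) = M4 a11 0 0 0 0 a22 0 0 0 0 a44 0 0 0 0 a33 - M4 a11 0 0 0 0 a22 0 0 0 0 a33 0 0 0 0 a44;
    [unE; m4 | apply: rpredB; [exact: dC | exact: dX]].
have key : (a44 - a22) *: (E33 - E44) \in H \/ (a33 = 0 /\ a44 = 0 /\ a22 != 0).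
  case: (eqVneq a33 a44) => [e34|n34]; last first.
    left; apply: rpredZ; apply: (scale_cancel (c := a44 - a33)); [by rewrite subr_eq0 eq_sym | exact: k34].
  case: (eqVneq a22 a44) => [e24|n24]; first by left; rewrite e24 subrr scale0r rpred0.
  have h23 : E22 - E33 \in H.
    by apply: (scale_cancel (c := a33 - a22)); [rewrite subr_eq0 e34 eq_sym | exact: k23].
  case: (eqVneq a44 0) => [z44|nz44]; first by right; move: n24; rewrite e34 z44 => n24; do !split.
  left; apply: rpredZ.
  case: (eqVneq a11 a22) => [e12|n12].
  + apply: (scale_cancel (c := 2 * a44)); first by rewrite mulf_neq0 // pnatr_eq0.
    have -> : (2 * a44) *: (E33 - E44) = - (M4 a33 0 0 0 0 a11 0 0 0 0 a22 0 0 0 0 a44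
          + M4 a11 0 0 0 0 a22 0 0 0 0 a33 0 0 0 0 a44) - (2 * a44) *: (E22 - E33).
      have e22 : a22 = - a44 by apply: (mulfI (x := 2 : CC)); [rewrite pnatr_eq0 | rewrite -[RHS]addr0 -htr e12 e34; ring].
      by rewrite e12 e34 e22; unE; m4.
    by apply: rpredB; [rewrite rpredN; apply: rpredD; [exact: dG | exact: dX] | apply: rpredZ; exact: h23].
  + have h12 : E11 - E22 \in H by apply: (scale_cancel (c := a22 - a11)); [rewrite subr_eq0 eq_sym | exact: k12].
    apply: (scale_cancel nz44).
    have -> : a44 *: (E33 - E44) = a11 *: (E11 - E22) + (a11 + a22) *: (E22 - E33)
          - M4 a11 0 0 0 0 a22 0 0 0 0 a33 0 0 0 0 a44.
      have e11 : a11 = - (a22 + 2 * a44) by rewrite -[RHS]addr0 -htr e34; ring.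
      by rewrite e34 e11; unE; m4.
    by apply: rpredB; [apply: rpredD; apply: rpredZ; [exact: h12 | exact: h23] | exact: dX].
case: key => [k24|[z33 [z44 nz22]]].
  apply: (outW2 (g := S23) (gi := S23^T)).
  - exact: det_S23.
  - by rewrite /S23 M4_tr M4_one; m4.
  - by rewrite /S23 /m2 !M4E /= (_ : _ - _ = 1) ?oner_eq0 //; ring.
  have [p12 p13 p14] := c4 a12 (or_introl erefl).
  have [q12 q13 q14] := c4 a13 (or_intror (or_introl erefl)).
  have [r12 r13 r14] := c4 a14 (or_intror (or_intror erefl)).
  have -> : S23^T *m X *m S23 = X + (a33 - a22) *: (E22 - E33) + (a44 - a22) *: (E33 - E44)
     + a12 *: E14 + a13 *: E12 + a14 *: E13 - a12 *: E12 - a13 *: E13 - a14 *: E14.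
    by rewrite /S23 z41 z42 z31 z32 z43 z34 z21 z23 z24; unE; rewrite M4_tr; m4.
  apply: rpredB; last exact: r14.
  apply: rpredB; last exact: q13.
  apply: rpredB; last exact: p12.
  apply: rpredD; last exact: r13.
  apply: rpredD; last exact: q12.
  apply: rpredD; last exact: p14.
  apply: rpredD; last exact: k24.
  apply: rpredD; [exact: fX | exact: k23].
have e11 : a11 = - a22 by rewrite -[RHS]addr0 -htr z33 z44; ring.
pose n2 := - a12 / (2 * a22); pose n3 := - a13 / a22; pose n4 := - a14 / a22.
pose bm := M4 1 (- n2) (- n3) (- n4) 0 1 0 0 0 0 1 0 0 0 0 1.
pose bp := M4 1 n2 n3 n4 0 1 0 0 0 0 1 0 0 0 0 1.
have ubm : inB bm by split; [exact: upper_M4 | rewrite /inSL det_M4_upper; ring].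
have nz2a : 2 * a22 != 0 by rewrite mulf_neq0 // pnatr_eq0.
have f1 : (S2^T *m bp) *m X *m (bm *m S2) \in H.
  apply: (hess_in hiff); first exact: zclW_b.
  by rewrite /bm /bp /S2 M4_tr M4_one; m4.
have e1 : (S2^T *m bp) *m X *m (bm *m S2) = - a22 *: (E11 - E33).
  by rewrite /bm /bp /n2 /n3 /n4 /S2 e11 z33 z44 z41 z42 z31 z32 z43 z34 z21 z23 z24; unE; rewrite M4_tr; m4f.
apply: (outW1 (g := bm *m G12) (gi := G12^T *m bp)).
- by rewrite det_mulmx det_G12 det_M4_upper; ring.
- by rewrite /bm /bp /G12 M4_tr M4_one; m4.
- by rewrite /bm /G12 /m1 M4_mul !M4E /= (_ : _ - _ = 1) ?oner_eq0 //; ring.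
have -> : (G12^T *m bp) *m X *m (bm *m G12) = - (- a22 *: (E11 - E33)).
  by rewrite /bm /bp /n2 /n3 /n4 /G12 e11 z33 z44 z41 z42 z31 z32 z43 z34 z21 z23 z24; unE; rewrite M4_tr; m4f.
by rewrite rpredN -e1; exact: f1.
Qed.

Lemma mainW : False.
Proof.
case: (eqVneq a41 0) => [z41|n]; last by apply: caseI; rewrite n.
case: (eqVneq a42 0) => [z42|n]; last by apply: caseI; rewrite n orbT.
case: (eqVneq a31 0) => [z31|n]; last by apply: caseI; rewrite n !orbT.
case: (eqVneq a32 0) => [z32|n]; last by apply: caseI; rewrite n !orbT.
case: (eqVneq a43 0) => [z43|n]; last by apply: caseI; rewrite n !orbT.
case: (eqVneq a34 0) => [z34|n]; last by apply: caseI; rewrite n !orbT.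
case: (eqVneq a21 0) => [z21|n]; last by apply: (caseII z41 z42 z43); rewrite n.
case: (eqVneq a23 0) => [z23|n]; last by apply: (caseII z41 z42 z43); rewrite n orbT.
case: (eqVneq a24 0) => [z24|n]; last by apply: (caseII z41 z42 z43); rewrite n !orbT.
exact: caseIII.
Qed.

End MainW.

End MW.
Import MW.

Lemma oneline_nth (w : 'S_4) (i : 'I_4) : nth 0%N (oneline w) i = (val (w i)).+1.
Proof.
rewrite /oneline (nth_map o0); last by rewrite size_enum_ord.
by rewrite nth_ord_enum.
Qed.

Lemma perm_matrix_inv (w : 'S_4) (i j : 'I_4) : perm_matrix (w^-1)%g i j = (w i == j)%:R.
Proof. by rewrite mxE (canF_eq (permK w)). Qed.

Lemma pm_of (w : 'S_4) (l : seq nat) (P : 'M4) :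
  oneline w = l -> (forall i j : 'I_4, P i j = ((nth 0%N l i) == j.+1)%:R) -> perm_matrix (w^-1)%g = P.
Proof.
move=> hl hP; apply/matrixP => i j; rewrite perm_matrix_inv hP -hl oneline_nth eqSS.
by [].
Qed.

Theorem lemma4p5 (w : 'S_4) :
  oneline w \in [:: [:: 4; 1; 2; 3]%N; [:: 2; 3; 4; 1]%N] ->
  ~ exists (x : 'M4) (H : {vspace 'M4}),
      in_sl x /\ hessenberg_space H /\
      (forall g : 'M4, in_hess x H g <-> in_schubert (w^-1)%g g).
Proof.
move=> hw [x [H [hx [hH hiff]]]].
move: hx; rewrite /in_sl (M4_eta x) tr_M4 => htr.
rewrite (M4_eta x) in hiff.
move: hw; rewrite !inE => /orP [/eqP hl|/eqP hl].
- have hu : perm_matrix (w^-1)%g = PV.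
    by apply: (pm_of hl) => i j; rewrite M4E; ord4 i; ord4 j.
  exact: (mainV hu hH htr hiff).
- have hu : perm_matrix (w^-1)%g = PW.
    by apply: (pm_of hl) => i j; rewrite M4E; ord4 i; ord4 j.
  exact: (mainW hu hH htr hiff).
Qed.
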